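(* Let $\sigma>0$, $\varepsilon>0$, $T>0$, $0<c<M$, $0<\Delta x\le 1$. Let $(\tau_i(t),u_i(t))_{i\in\mathbb Z}$ be a $C^1$-in-time solution on $[0,T)$ of the semi-discrete scheme (H) and $(\bar\tau_i(t),\bar u_i(t))_{i\in\mathbb Z}$ a $C^1$-in-time solution on $[0,T)$ of the semi-discrete scheme (P), with the same $\lambda$ defined from $(\tau_i)$ as in the context. Assume $c\le\tau_i(t),\bar\tau_i(t)\le M$ for all $i,t$; that $\lim_{i\to\pm\infty}\tau_i=\lim_{i\to\pm\infty}\bar\tau_i=\tau_\pm$ and $\lim_{i\to\pm\infty}u_i=\lim_{i\to\pm\infty}\bar u_i=0$ for constants $\tau_\pm>0$, with enough summability that $\phi^\varepsilon(t)$ is finite, differentiable in $t$, and all sums appearing may be rearranged termwise; that $\phi^\varepsilon(0)<\infty$; and that for some $K<\infty$, $$\|\tilde D_{tx}p(\bar\tau)\|_{L^2(Q_T)}\le K,\ \|\tilde D_{xx}p(\bar\tau)\|_{L^\infty(Q_T)}\le K,\ \|D_{xx}\bar\tau\|_{L^\infty(Q_T)}\le K,\ \|D_x\bar\tau\|_{L^\infty(Q_T)}\le K,\ \|D_{xx}\bar u\|_{L^2(Q_T)}\le K.$$ Then there is $B>0$, depending only on $K$, $\sigma$, $c$, $M$ and $p$ (not on $\varepsilon$), such that $$\phi^\varepsilon(t)\le Be^{BT}\big(\phi^\varepsilon(0)+\varepsilon^4\big),\qquad t\in[0,T).$$ Moreover, if $\phi^\varepsilon(0)\to0$ as $\varepsilon\to0$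 then $\sup_{t\in[0,T)}\phi^\varepsilon(t)\to0$.
   Context: The pressure $p\in C^2((0,\infty))$ satisfies $p>0$, $p'<0$. Fix $\tau_\star>0$, $P(\tau)=\int_{\tau_\star}^\tau p(s)ds$, $P(\tau|\bar\tau)=P(\tau)-P(\bar\tau)-p(\bar\tau)(\tau-\bar\tau)$. Uniform mesh of size $\Delta x$, $Q_T=\mathbb R\times[0,T)$, and $\lambda=\sup_{t\in(0,T)}\max_{i\in\mathbb Z}\sqrt{-p'(\tau_i(t))}$. Scheme (H): $\frac{d}{dt}\tau_i=\frac{1}{2\Delta x}(u_{i+1}-u_{i-1})+\frac{\lambda}{2\Delta x}(\tau_{i+1}-2\tau_i+\tau_{i-1})$, $\frac{d}{dt}u_i=\frac{\lambda}{2\Delta x}(u_{i+1}-2u_i+u_{i-1})-\frac{1}{2\varepsilon^2\Delta x}(p(\tau_{i+1})-p(\tau_{i-1}))-\frac{\sigma}{\varepsilon^2}u_i$. Scheme (P): $\frac{d}{dt}\bar\tau_i=\frac{1}{2\Delta x}(\bar u_{i+1}-\bar u_{i-1})+\frac{\lambda}{2\Delta x}(\bar\tau_{i+1}-2\bar\tau_i+\bar\tau_{i-1})$, $\sigma\bar u_i=-\frac{p(\bar\tau_{i+1})-p(\bar\tau_{i-1})}{2\Delta x}$. Discrete relative entropy $\eta_i^\varepsilon=\frac{\varepsilon^2}{2}(u_i-\bar u_i)^2-P(\tau_i|\bar\tau_i)$ and $\phi^\varepsilon(t)=\sum_{i\in\mathbb Z}\Delta x\,\eta_i^\varepsilon(t)$.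 For $v=(v_i(t))$: $\|D_xv\|_{L^\infty(Q_T)}=\sup_{t,i}|\frac{v_{i+1}-v_i}{\Delta x}|$; $\|\tilde D_{xx}v\|_{L^\infty(Q_T)}=\sup_{t,i}|\frac{v_{i+2}-2v_i+v_{i-2}}{(2\Delta x)^2}|$; $\|D_{xx}v\|_{L^\infty(Q_T)}=\sup_{t,i}|\frac{v_{i+1}-2v_i+v_{i-1}}{(\Delta x)^2}|$; $\|\tilde D_{tx}v\|_{L^2(Q_T)}=\big(\int_0^T\sum_i\Delta x|\frac{d}{dt}\frac{v_{i+1}-v_{i-1}}{2\Delta x}|^2ds\big)^{1/2}$; $\|D_{xx}v\|_{L^2(Q_T)}=\big(\int_0^T\sum_i\Delta x|\frac{v_{i+1}-2v_i+v_{i-1}}{(\Delta x)^2}|^2ds\big)^{1/2}$. Here $p(\bar\tau)$ denotes the sequence $(p(\bar\tau_i(t)))_i$. *)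

(* Defs.v *)
From Stdlib Require Import Reals Lra ZArith Classical ClassicalEpsilon.
Open Scope R_scope.

(* Riemann integral of f from a to b (0 if f is not Riemann integrable;
   RiemannInt does not depend on the integrability proof). *)
Definition Rint (f : R -> R) (a b : R) : R :=
  match excluded_middle_informative (inhabited (Riemann_integrable f a b)) with
  | left H => RiemannInt (epsilon H (fun _ => True))
  | right _ => 0
  end.

Definition Ppot (p : R -> R) (tstar x : R) : R := Rint p tstar x.

Definition Prel (p : R -> R) (tstar x xb : R) : R :=
  Ppot p tstar x - Ppot p tstar xb - p xb * (x - xb).

Definition Zsum (f : Z -> R) (l : R) : Prop :=
  exists l1 l2,
    infinite_sum (fun n => f (Z.of_nat n)) l1 /\
    infinite_sum (fun n => f (- Z.of_nat (S n))%Z) l2 /\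
    l = l1 + l2.

Definition Zsq_summable (f : Z -> R) : Prop :=
  exists l, Zsum (fun i => (f i) ^ 2) l.

Definition Zfinsum (N : nat) (f : Z -> R) : R :=
  sum_f_R0 (fun k => f (Z.of_nat k - Z.of_nat N)%Z) (2 * N).

Definition within_cont (f : R -> R) (T t : R) : Prop :=
  limit1_in f (fun s => 0 <= s < T) (f t) t.

Definition C1_time (f df : R -> R) (T : R) : Prop :=
  (forall t, 0 < t < T -> derivable_pt_lim f t (df t)) /\
  (forall t, 0 <= t < T -> within_cont f T t /\ within_cont df T t).

Definition eta (p : R -> R) (tstar eps : R) (tau u taub ub : Z -> R -> R)
  (i : Z) (t : R) : R :=
  eps ^ 2 / 2 * (u i t - ub i t) ^ 2 - Prel p tstar (tau i t) (taub i t).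

Definition Dx (dx : R) (v : Z -> R -> R) (i : Z) (t : R) : R :=
  (v (i + 1)%Z t - v i t) / dx.
Definition Dxx (dx : R) (v : Z -> R -> R) (i : Z) (t : R) : R :=
  (v (i + 1)%Z t - 2 * v i t + v (i - 1)%Z t) / dx ^ 2.
Definition Dxx_tilde (dx : R) (v : Z -> R -> R) (i : Z) (t : R) : R :=
  (v (i + 2)%Z t - 2 * v i t + v (i - 2)%Z t) / (2 * dx) ^ 2.
(* d/dt of (v_{i+1}-v_{i-1})/(2dx), given the time derivative dv of v *)
Definition Dtx_tilde (dx : R) (dv : Z -> R -> R) (i : Z) (t : R) : R :=
  (dv (i + 1)%Z t - dv (i - 1)%Z t) / (2 * dx).

Definition Linf_le (T : R) (g : Z -> R -> R) (K : R) : Prop :=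
  forall i t, 0 <= t < T -> Rabs (g i t) <= K.

(* (int_0^T sum_i dx |g_i|^2)^(1/2) <= K, via truncations in i and in time *)
Definition L2_le (T dx : R) (g : Z -> R -> R) (K : R) : Prop :=
  0 <= K /\
  forall (N : nat) (T' : R), 0 <= T' < T ->
  forall pr : Riemann_integrable (fun s => Zfinsum N (fun i => dx * (g i s) ^ 2)) 0 T',
    RiemannInt pr <= K ^ 2.

Definition lambda_def (dp : R -> R) (tau : Z -> R -> R) (T lam : R) : Prop :=
  is_lub (fun y => exists t i, 0 < t < T /\ y = sqrt (- dp (tau i t))) lam.

Definition setting (p dp : R -> R) (tstar sigma c M K T eps dx lam : R)
  (tau u taub ub dtau du dtaub dub : Z -> R -> R) (Phi : R -> R) : Prop :=
  0 < tstar /\ 0 < T /\ 0 < eps /\ 0 < dx /\ dx <= 1 /\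
  lambda_def dp tau T lam /\
  (forall i, C1_time (tau i) (dtau i) T /\ C1_time (u i) (du i) T /\
             C1_time (taub i) (dtaub i) T /\ C1_time (ub i) (dub i) T) /\
  (* scheme (H) *)
  (forall i t, 0 < t < T ->
     dtau i t = (u (i + 1)%Z t - u (i - 1)%Z t) / (2 * dx)
                + lam / (2 * dx) * (tau (i + 1)%Z t - 2 * tau i t + tau (i - 1)%Z t) /\
     du i t = lam / (2 * dx) * (u (i + 1)%Z t - 2 * u i t + u (i - 1)%Z t)
              - 1 / (2 * eps ^ 2 * dx) * (p (tau (i + 1)%Z t) - p (tau (i - 1)%Z t))
              - sigma / eps ^ 2 * u i t) /\
  (* scheme (P) *)
  (forall i t, 0 < t < T ->
     dtaub i t = (ub (i + 1)%Z t - ub (i - 1)%Z t) / (2 * dx)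
                 + lam / (2 * dx) * (taub (i + 1)%Z t - 2 * taub i t + taub (i - 1)%Z t)) /\
  (forall i t, 0 <= t < T ->
     sigma * ub i t = - (p (taub (i + 1)%Z t) - p (taub (i - 1)%Z t)) / (2 * dx)) /\
  (forall i t, 0 <= t < T ->
     c <= tau i t <= M /\ c <= taub i t <= M) /\
  (exists taum taup, 0 < taum /\ 0 < taup /\
     forall t, 0 <= t < T ->
       Un_cv (fun n => tau (Z.of_nat n) t) taup /\
       Un_cv (fun n => tau (- Z.of_nat n)%Z t) taum /\
       Un_cv (fun n => taub (Z.of_nat n) t) taup /\
       Un_cv (fun n => taub (- Z.of_nat n)%Z t) taum /\
       Un_cv (fun n => u (Z.of_nat n) t) 0 /\
       Un_cv (fun n => u (- Z.of_nat n)%Z t) 0 /\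
       Un_cv (fun n => ub (Z.of_nat n) t) 0 /\
       Un_cv (fun n => ub (- Z.of_nat n)%Z t) 0) /\
  (forall t, 0 <= t < T ->
     Zsq_summable (fun i => tau i t - taub i t) /\
     Zsq_summable (fun i => u i t - ub i t) /\
     Zsq_summable (fun i => taub (i + 1)%Z t - taub i t)) /\
  (forall t, 0 <= t < T ->
     Zsum (fun i => dx * eta p tstar eps tau u taub ub i t) (Phi t)) /\
  within_cont Phi T 0 /\
  (forall t, 0 < t < T ->
     exists (g : Z -> R) (l : R),
       (forall i, derivable_pt_lim (fun s => dx * eta p tstar eps tau u taub ub i s) t (g i)) /\
       Zsum g l /\ derivable_pt_lim Phi t l) /\
  L2_le T dx (Dtx_tilde dx (fun i t => dp (taub i t) * dtaub i t)) K /\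
  Linf_le T (Dxx_tilde dx (fun i t => p (taub i t))) K /\
  Linf_le T (Dxx dx taub) K /\
  Linf_le T (Dx dx taub) K /\
  L2_le T dx (Dxx dx ub) K.

(* Main.v *)
From Pilot Require Import Defs.
From Stdlib Require Import Reals ZArith Lra Lia Psatz Classical ClassicalEpsilon.
Open Scope R_scope.

Lemma dl_cont f x l : derivable_pt_lim f x l -> continuity_pt f x.
Proof. intro H. apply (derivable_continuous_pt f x (exist _ l H)). Qed.

Lemma dl_mult f g x a b : derivable_pt_lim f x a -> derivable_pt_lim g x b ->
  derivable_pt_lim (fun s => f s * g s) x (a * g x + f x * b).
Proof. intros; exact (derivable_pt_lim_mult f g x a b H H0). Qed.
Lemma dl_plus f g x a b : derivable_pt_lim f x a -> derivable_pt_lim g x b ->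
  derivable_pt_lim (fun s => f s + g s) x (a + b).
Proof. intros; exact (derivable_pt_lim_plus f g x a b H H0). Qed.
Lemma dl_minus f g x a b : derivable_pt_lim f x a -> derivable_pt_lim g x b ->
  derivable_pt_lim (fun s => f s - g s) x (a - b).
Proof. intros; exact (derivable_pt_lim_minus f g x a b H H0). Qed.
Lemma dl_const (a x : R) : derivable_pt_lim (fun _ => a) x 0.
Proof. exact (derivable_pt_lim_const a x). Qed.
Lemma dl_id x : derivable_pt_lim (fun s => s) x 1.
Proof. exact (derivable_pt_lim_id x). Qed.
Lemma dl_comp f g x a b : derivable_pt_lim f x a -> derivable_pt_lim g (f x) b ->
  derivable_pt_lim (fun s => g (f s)) x (b * a).
Proof. intros; exact (derivable_pt_lim_comp f g x a b H H0). Qed.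
Lemma dl_ext f g x l : (forall s, f s = g s) -> derivable_pt_lim f x l -> derivable_pt_lim g x l.
Proof. intros He H. apply (derivable_pt_lim_locally_ext f g x (x-1) (x+1)); auto; lra. Qed.
Lemma dl_eqv f x l1 l2 : derivable_pt_lim f x l1 -> l1 = l2 -> derivable_pt_lim f x l2.
Proof. intros; subst; auto. Qed.

Lemma mvt_between f f' a b :
  (forall z, Rmin a b <= z <= Rmax a b -> derivable_pt_lim f z (f' z)) ->
  exists z, Rmin a b <= z <= Rmax a b /\ f b - f a = f' z * (b - a).
Proof.
  intros H. destruct (Rtotal_order a b) as [Hab|[Hab|Hab]].
  - destruct (MVT_cor2 f f' a b Hab) as [z [E Hz]].
    + intros z Hz; apply H; rewrite Rmin_left, Rmax_right; lra.
    + exists z; split; auto; rewrite Rmin_left, Rmax_right; lra.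
  - subst; exists b; split; [rewrite Rmin_left, Rmax_left; lra| ring].
  - destruct (MVT_cor2 f f' b a Hab) as [z [E Hz]].
    + intros z Hz; apply H; rewrite Rmin_right, Rmax_left; lra.
    + exists z; split; [rewrite Rmin_right, Rmax_left; lra| lra].
Qed.

Lemma lip f f' lo hi D x y :
  (forall z, lo <= z <= hi -> derivable_pt_lim f z (f' z) /\ Rabs (f' z) <= D) ->
  lo <= x <= hi -> lo <= y <= hi -> Rabs (f x - f y) <= D * Rabs (x - y).
Proof.
  intros H Hx Hy.
  destruct (mvt_between f f' y x) as [z [Hz E]].
  { intros z Hz; apply H. split; [apply Rle_trans with (Rmin y x)|apply Rle_trans with (Rmax y x)];
    try apply Rmin_glb; try apply Rmax_lub; lra. }
  assert (Hz' : lo <= z <= hi).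
  { split; [apply Rle_trans with (Rmin y x)|apply Rle_trans with (Rmax y x)];
    try apply Rmin_glb; try apply Rmax_lub; lra. }
  rewrite E, Rabs_mult. apply Rmult_le_compat_r; [apply Rabs_pos| apply H; auto].
Qed.

Lemma dl_opp f x a : derivable_pt_lim f x a -> derivable_pt_lim (fun s => - f s) x (- a).
Proof. intros; exact (derivable_pt_lim_opp f x a H). Qed.
Lemma dl_sq f x a : derivable_pt_lim f x a -> derivable_pt_lim (fun s => f s ^ 2) x (2 * f x * a).
Proof. intros. eapply dl_ext with (fun s => f s * f s). intro; ring.
  eapply dl_eqv. apply dl_mult; eauto. ring. Qed.

Ltac dtac0 :=
 lazymatch goal with
 | |- derivable_pt_lim (fun s => @?f s + @?g s) _ _ => eapply dl_eqv; [apply (dl_plus f g); dtac0| reflexivity]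
 | |- derivable_pt_lim (fun s => @?f s - @?g s) _ _ => eapply dl_eqv; [apply (dl_minus f g); dtac0| reflexivity]
 | |- derivable_pt_lim (fun s => @?f s * @?g s) _ _ => eapply dl_eqv; [apply (dl_mult f g); dtac0| reflexivity]
 | |- derivable_pt_lim (fun s => - @?f s) _ _ => eapply dl_eqv; [apply (dl_opp f); dtac0| reflexivity]
 | |- derivable_pt_lim (fun s => (@?f s) ^ 2) _ _ => eapply dl_eqv; [apply (dl_sq f); dtac0| reflexivity]
 | |- derivable_pt_lim (fun s => s) _ _ => apply dl_id
 | |- derivable_pt_lim (fun _ => ?a) _ _ => apply dl_const
 | _ => idtac
 end.
Ltac dtac := eapply dl_eqv; [dtac0|].

Lemma abs_le_inv x y : Rabs x <= y -> - y <= x <= y.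
Proof. intros H. unfold Rabs in H. destruct (Rcase_abs x); lra. Qed.
Lemma pow2_abs x : x ^ 2 = Rabs x ^ 2.
Proof. unfold Rabs; destruct (Rcase_abs x); ring. Qed.
Lemma abs_le_intro x y : - y <= x -> x <= y -> Rabs x <= y.
Proof. intros; unfold Rabs; destruct (Rcase_abs x); lra. Qed.

Definition HypP (p dp d2p : R -> R) := forall x, 0 < x ->
          derivable_pt_lim p x (dp x) /\ derivable_pt_lim dp x (d2p x) /\
          continuity_pt d2p x /\ 0 < p x /\ dp x < 0.

Lemma pconsts p dp d2p c M : HypP p dp d2p -> 0 < c -> c < M ->
 exists D1 m D2, 0 < m /\ 0 <= D1 /\ 0 <= D2 /\
 (forall x, c<=x<=M -> m <= - dp x /\ Rabs (dp x) <= D1) /\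
 (forall x, c/2 <= x <= M + c/2 -> Rabs (d2p x) <= D2).
Proof.
  intros Hp Hc HcM.
  assert (Cdp : forall x, 0 < x -> continuity_pt dp x).
  { intros x Hx; destruct (Hp x Hx) as [_ [H _]]; eapply dl_cont; eauto. }
  assert (Cndp : forall x, c <= x <= M -> continuity_pt (fun y => - dp y) x).
  { intros x Hx. apply continuity_pt_opp. apply Cdp; lra. }
  destruct (continuity_ab_maj (fun y => - dp y) c M ltac:(lra) Cndp) as [xa [Ha Hxa]].
  destruct (continuity_ab_min (fun y => - dp y) c M ltac:(lra) Cndp) as [xb [Hb Hxb]].
  assert (Cd2 : forall x, c/2 <= x <= M + c/2 -> continuity_pt d2p x).
  { intros x Hx; destruct (Hp x ltac:(lra)) as [_ [_ [H _]]]; auto. }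
  destruct (continuity_ab_maj d2p (c/2) (M + c/2) ltac:(lra) Cd2) as [xc [Hc1 Hxc]].
  destruct (continuity_ab_min d2p (c/2) (M + c/2) ltac:(lra) Cd2) as [xd [Hd1 Hxd]].
  exists (- dp xa), (- dp xb), (Rmax (Rabs (d2p xc)) (Rabs (d2p xd))).
  destruct (Hp xb ltac:(lra)) as [_ [_ [_ [_ Hneg]]]].
  destruct (Hp xa ltac:(lra)) as [_ [_ [_ [_ Hnega]]]].
  split; [lra|]. split; [lra|]. split.
  { apply Rle_trans with (Rabs (d2p xc)); [apply Rabs_pos| apply Rmax_l]. }
  split.
  - intros. split. apply Hb; auto. destruct (Hp x ltac:(lra)) as [_ [_ [_ [_ Hn]]]]. rewrite Rabs_left; [|auto].
    specialize (Ha x H). lra.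
  - intros x Hx. specialize (Hc1 x Hx). specialize (Hd1 x Hx).
    apply Rabs_le. split.
    + apply Rle_trans with (d2p xd); auto.
      apply Rle_trans with (- Rabs (d2p xd)). apply Ropp_le_contravar, Rmax_r.
      pose proof (Rle_abs (- d2p xd)). rewrite Rabs_Ropp in H. lra.
    + apply Rle_trans with (d2p xc); auto.
      apply Rle_trans with (Rabs (d2p xc)). apply Rle_abs. apply Rmax_l.
Qed.

Lemma hp_p p dp d2p x : HypP p dp d2p -> 0 < x -> derivable_pt_lim p x (dp x).
Proof. intros H Hx; apply (H x Hx). Qed.
Lemma hp_dp p dp d2p x : HypP p dp d2p -> 0 < x -> derivable_pt_lim dp x (d2p x).
Proof. intros H Hx; apply (H x Hx). Qed.
Lemma hp_neg p dp d2p x : HypP p dp d2p -> 0 < x -> dp x < 0.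
Proof. intros H Hx; apply (H x Hx). Qed.
Lemma hp_cp p dp d2p x : HypP p dp d2p -> 0 < x -> continuity_pt p x.
Proof. intros H Hx; eapply dl_cont; apply (H x Hx). Qed.
Lemma hp_cdp p dp d2p x : HypP p dp d2p -> 0 < x -> continuity_pt dp x.
Proof. intros H Hx; eapply dl_cont; apply (H x Hx). Qed.

Lemma Rint_val f a b (pr : Riemann_integrable f a b) : Rint f a b = RiemannInt pr.
Proof.
  unfold Rint. destruct excluded_middle_informative as [H|H].
  - apply RiemannInt_P5.
  - exfalso; apply H; constructor; exact pr.
Qed.

Lemma prim_val (f : R -> R) (a b : R) (h : a <= b) (pr : forall x:R, a <= x -> x <= b -> Riemann_integrable f a x) (z : R) (H1 : a <= z) (H2 : z <= b) :
  primitive h pr z = RiemannInt (pr z H1 H2).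
Proof.
  unfold primitive. destruct (Rle_dec a z); [|exfalso; lra]. destruct (Rle_dec z b); [|exfalso; lra].
  apply RiemannInt_P5.
Qed.

Lemma Ppot_deriv p tstar x : (forall y, 0 < y -> continuity_pt p y) -> 0 < tstar -> 0 < x ->
  derivable_pt_lim (Ppot p tstar) x (p x).
Proof.
  intros Cp Ht Hx.
  set (a := Rmin tstar x / 2). set (b := Rmax tstar x + 1).
  assert (Ha : 0 < a) by (unfold a; apply Rmin_case; lra).
  assert (Hat : a < tstar) by (unfold a; pose proof (Rmin_l tstar x); lra).
  assert (Hax : a < x) by (unfold a; pose proof (Rmin_r tstar x); lra).
  assert (Hbt : tstar < b) by (unfold b; pose proof (Rmax_l tstar x); lra).
  assert (Hbx : x < b) by (unfold b; pose proof (Rmax_r tstar x); lra).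
  assert (h : a <= b) by lra.
  assert (C0 : forall y, a <= y <= b -> continuity_pt p y) by (intros; apply Cp; lra).
  set (Pr := primitive h (FTC_P1 h C0)).
  assert (E : forall z, a < z < b -> Pr z - Pr tstar = Ppot p tstar z).
  { intros z Hz. unfold Pr.
    rewrite (prim_val _ _ _ h (FTC_P1 h C0) z (Rlt_le _ _ (proj1 Hz)) (Rlt_le _ _ (proj2 Hz))).
    rewrite (prim_val _ _ _ h (FTC_P1 h C0) tstar (Rlt_le _ _ Hat) (Rlt_le _ _ Hbt)).
    set (pz := FTC_P1 h C0 (Rlt_le a z (proj1 Hz)) (Rlt_le z b (proj2 Hz))).
    set (pt := FTC_P1 h C0 (Rlt_le a tstar Hat) (Rlt_le tstar b Hbt)).
    pose (ptz := RiemannInt_P24 (RiemannInt_P1 pt) pz).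
    unfold Ppot. rewrite (Rint_val _ _ _ ptz).
    pose proof (RiemannInt_P26 pt ptz pz). lra. }
  apply (derivable_pt_lim_locally_ext (fun z => Pr z - Pr tstar) _ x a b); auto.
  apply dl_eqv with (p x - 0). apply dl_minus. apply RiemannInt_P28; lra. apply dl_const. ring.
Qed.

Lemma btw_in lo hi x y z : lo <= x <= hi -> lo <= y <= hi -> Rmin x y <= z <= Rmax x y -> lo <= z <= hi.
Proof.
  intros Hx Hy Hz. split.
  - apply Rle_trans with (Rmin x y); [apply Rmin_glb; lra| lra].
  - apply Rle_trans with (Rmax x y); [lra| apply Rmax_lub; lra].
Qed.

Lemma btw_abs x y z : Rmin x y <= z <= Rmax x y -> Rabs (z - x) <= Rabs (y - x).
Proof.
  intros [H1 H2]. unfold Rmin, Rmax in *. destruct (Rle_dec x y);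
  apply Rabs_le; split; try (rewrite Rabs_right by lra; lra); try (rewrite Rabs_left1 by lra; lra).
Qed.

Lemma dl_shift f a s l : derivable_pt_lim f (a + s) l -> derivable_pt_lim (fun s => f (a + s)) s l.
Proof.
  intro H. apply dl_eqv with (l * 1). apply (dl_comp (fun s => a + s) f).
  apply dl_eqv with (0 + 1). apply dl_plus. apply dl_const. apply dl_id. ring. auto. ring.
Qed.


Lemma L_lipp p dp d2p c M D1 x y : HypP p dp d2p -> 0 < c ->
  (forall x, c<=x<=M -> Rabs (dp x) <= D1) -> c<=x<=M -> c<=y<=M ->
  Rabs (p x - p y) <= D1 * Rabs (x - y).
Proof.
  intros Hp Hc Hd Hx Hy. apply (lip p dp c M D1); auto.
  intros z Hz; split; [eapply hp_p; eauto; lra| auto].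
Qed.

Lemma L_lipdp p dp d2p lo hi D2 x y : HypP p dp d2p -> 0 < lo ->
  (forall x, lo<=x<=hi -> Rabs (d2p x) <= D2) -> lo<=x<=hi -> lo<=y<=hi ->
  Rabs (dp x - dp y) <= D2 * Rabs (x - y).
Proof.
  intros Hp Hc Hd Hx Hy. apply (lip dp d2p lo hi D2); auto.
  intros z Hz; split; [eapply hp_dp; eauto; lra| auto].
Qed.

Lemma L_taylor p dp d2p c M D2 x y : HypP p dp d2p -> 0 < c -> c < M ->
  (forall x, c/2<=x<=M+c/2 -> Rabs (d2p x) <= D2) -> c<=x<=M -> c<=y<=M ->
  Rabs (p x - p y - dp y * (x - y)) <= D2 * (x - y) ^ 2.
Proof.
  intros Hp Hc HcM Hd Hx Hy.
  destruct (mvt_between (fun z => p z - dp y * z) (fun z => dp z - dp y) y x) as [z [Hz E]].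
  { intros z Hz. pose proof (btw_in c M y x z Hy Hx Hz).
    apply dl_eqv with (dp z - dp y * 1). apply dl_minus. eapply hp_p; eauto; lra.
    apply dl_eqv with (0 * z + dp y * 1). apply (dl_mult (fun _ => dp y) (fun s => s)). apply dl_const. apply dl_id. ring. ring. }
  pose proof (btw_in c M y x z Hy Hx Hz) as Hz'.
  replace (p x - p y - dp y * (x - y)) with ((dp z - dp y) * (x - y)) by lra.
  rewrite Rabs_mult.
  pose proof (L_lipdp p dp d2p (c/2) (M + c/2) D2 z y Hp ltac:(lra) Hd ltac:(lra) ltac:(lra)) as H1.
  pose proof (btw_abs y x z Hz) as H2.
  assert (0 <= D2). { apply Rle_trans with (Rabs (d2p c)). apply Rabs_pos. apply Hd; lra. }
  replace ((x - y) ^ 2) with (Rabs (x - y) * Rabs (x - y)).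
  2:{ rewrite <- Rabs_mult, Rabs_pos_eq; [ring| apply Rle_0_sqr]. }
  rewrite <- Rmult_assoc. apply Rmult_le_compat_r. apply Rabs_pos.
  apply Rle_trans with (D2 * Rabs (z - y)); auto.
  apply Rmult_le_compat_l; auto. Qed.

Lemma L_prel p dp d2p tstar c M m x y : HypP p dp d2p -> 0 < tstar -> 0 < c ->
  (forall x, c<=x<=M -> m <= - dp x) -> c<=x<=M -> c<=y<=M ->
  m / 2 * (x - y) ^ 2 <= - Prel p tstar x y.
Proof.
  intros Hp Ht Hc Hm Hx Hy.
  assert (Cp : forall z, 0 < z -> continuity_pt p z).
  { intros z Hz; eapply dl_cont; apply (Hp z Hz). }
  destruct (mvt_between (fun z => - Prel p tstar z y - m / 2 * (z - y) ^ 2)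
     (fun z => - (p z - p y) - m * (z - y)) y x) as [z [Hz E]].
  { intros z Hz. pose proof (btw_in c M y x z Hy Hx Hz). unfold Prel.
    dtac. apply Ppot_deriv; auto; try lra; intros; eapply hp_cp; eauto.
    field. }
  pose proof (btw_in c M y x z Hy Hx Hz) as Hz'.
  destruct (mvt_between p dp y z) as [w [Hw E2]].
  { intros w Hw. pose proof (btw_in c M y z w Hy Hz' Hw). eapply hp_p; eauto; lra. }
  pose proof (btw_in c M y z w Hy Hz' Hw) as Hw'.
  pose proof (Hm w Hw').
  assert (Prel p tstar y y = 0) by (unfold Prel; ring).
  rewrite H0 in E. rewrite E2 in E.
  assert (0 <= (z - y) * (x - y)).
  { unfold Rmin, Rmax in Hz; destruct (Rle_dec y x); nra. }
  nra.
Qed.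

Lemma L_visc p dp d2p c M D1 D2 K L lam dx a b ab bb :
 HypP p dp d2p -> 0 < c -> c < M -> 0 <= D1 -> 0 <= D2 -> 0 <= K -> 0 <= lam <= L -> 0 < dx ->
 (forall x, c<=x<=M -> Rabs (dp x) <= D1) -> (forall x, c/2<=x<=M+c/2 -> Rabs (d2p x) <= D2) ->
 c<=a<=M -> c<=b<=M -> c<=ab<=M -> c<=bb<=M -> Rabs (bb - ab) <= K*dx ->
 - (L*K*(2*D2 + 2*D1/c)) * ((a-ab)^2 + (b-bb)^2) <=
 lam/(2*dx) * ((-(p b - p bb) + (p a - p ab)) * (b - a) - (-(dp bb)*(b - bb) + dp ab * (a - ab)) * (bb - ab)).
Proof.
  intros Hp Hc HcM HD1 HD2 HK Hlam Hdx Hd1 Hd2 Ha Hb Hab Hbb Hd.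
  replace ((-(p b - p bb) + (p a - p ab)) * (b - a) - (-(dp bb)*(b - bb) + dp ab * (a - ab)) * (bb - ab))
    with ((-(p b - p bb) + (p a - p ab)) * ((b - bb) - (a - ab)) + (-(p b - p bb - dp bb * (b - bb)) - -(p a - p ab - dp ab * (a - ab))) * (bb - ab)) by ring.
  set (wa := a - ab). set (wb := b - bb). set (d := bb - ab). set (dw := wb - wa).
  set (dG := -(p b - p bb) + (p a - p ab)).
  set (k := lam / (2*dx)).
  assert (Hk0 : 0 <= k) by (unfold k; apply Rmult_le_pos; [lra| left; apply Rinv_0_lt_compat; lra]).
  assert (Hkdx : k * dx = lam / 2) by (unfold k; field; lra).
  set (Ra := -(p a - p ab - dp ab * (a - ab))). set (Rb := -(p b - p bb - dp bb * (b - bb))).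
  pose proof (L_taylor p dp d2p c M D2 a ab Hp Hc HcM Hd2 Ha Hab) as Ta.
  pose proof (L_taylor p dp d2p c M D2 b bb Hp Hc HcM Hd2 Hb Hbb) as Tb.
  assert (HRa : Rabs Ra <= D2 * wa ^ 2) by (unfold Ra, wa; rewrite Rabs_Ropp; auto).
  assert (HRb : Rabs Rb <= D2 * wb ^ 2) by (unfold Rb, wb; rewrite Rabs_Ropp; auto).
  set (W := wa ^ 2 + wb ^ 2).
  assert (HW0 : 0 <= W) by (unfold W; pose proof (pow2_ge_0 wa); pose proof (pow2_ge_0 wb); lra).
  assert (T1 : - (L * K * D2 / 2) * W <= k * ((Rb - Ra) * d)).
  { assert (Rabs ((Rb - Ra) * d) <= D2 * W * (K * dx)).
    { rewrite Rabs_mult. apply Rmult_le_compat; try apply Rabs_pos; auto.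
      apply Rle_trans with (Rabs Rb + Rabs Ra). 
      unfold Rminus; apply Rle_trans with (Rabs Rb + Rabs (- Ra)); [apply Rabs_triang| rewrite Rabs_Ropp; lra].
      unfold W; lra. }
    assert (- (D2 * W * (K * dx)) <= (Rb - Ra) * d) by (apply abs_le_inv in H; lra).
    apply Rle_trans with (k * (- (D2 * W * (K * dx)))).
    2: apply Rmult_le_compat_l; auto.
    replace (k * - (D2 * W * (K * dx))) with (- (lam / 2) * (K * D2) * W) by (rewrite <- Hkdx; ring).
    apply Rmult_le_compat_r; auto. assert (0 <= K * D2) by (apply Rmult_le_pos; auto). nra. }
  set (A := Rabs wa). set (B := Rabs wb).
  assert (HA : 0 <= A) by apply Rabs_pos. assert (HB : 0 <= B) by apply Rabs_pos.
  assert (HWAB : W = A ^ 2 + B ^ 2) by (unfold W, A, B; rewrite <- !pow2_abs; auto).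
  assert (HdwAB : Rabs dw <= A + B).
  { unfold dw, A, B. unfold Rminus. apply Rle_trans with (Rabs wb + Rabs (- wa)). apply Rabs_triang.
    rewrite Rabs_Ropp; lra. }
  assert (HL : 0 <= L) by lra.
  assert (HLK : 0 <= L * K) by (apply Rmult_le_pos; auto).
  assert (T2 : - (L * K * (3/2 * D2 + 2 * D1 / c)) * W <= k * (dG * dw)).
  { destruct (Rle_dec (K * dx) (c / 2)) as [Hs|Hs].
    -
      assert (Hd' : Rabs d <= c / 2) by (unfold d; lra).
      destruct (mvt_between p dp (a + d) b) as [xi [Hxi E1]].
      { intros z Hz. apply (hp_p p dp d2p); auto.
        apply abs_le_inv in Hd'. unfold Rmin, Rmax in Hz. destruct (Rle_dec (a+d) b); lra. }
      assert (Hxi0 : 0 < xi) by (apply abs_le_inv in Hd'; unfold Rmin, Rmax in Hxi; destruct (Rle_dec (a+d) b); lra).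
      pose proof (hp_neg p dp d2p xi Hp Hxi0) as Hneg.
      destruct (mvt_between (fun s => p (a + s) - p (ab + s)) (fun s => dp (a + s) - dp (ab + s)) 0 d)
        as [th [Hth E2]].
      { intros z Hz. apply abs_le_inv in Hd'. unfold Rmin, Rmax in Hz.
        assert (-(c/2) <= z <= c/2) by (destruct (Rle_dec 0 d); lra).
        apply dl_minus; apply dl_shift; apply (hp_p p dp d2p); auto; lra. }
      assert (Hth' : Rabs th <= c / 2).
      { apply abs_le_inv in Hd'. unfold Rmin, Rmax in Hth. apply abs_le_intro; destruct (Rle_dec 0 d); lra. }
      assert (Hq2 : Rabs (dp (a + th) - dp (ab + th)) <= D2 * A).
      { apply abs_le_inv in Hth'. unfold A, wa.
        replace (a - ab) with ((a + th) - (ab + th)) by ring.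
        apply (L_lipdp p dp d2p (c/2) (M + c/2) D2); auto; lra. }
      assert (Edg : dG * dw = - dp xi * dw ^ 2 + (- (dp (a + th) - dp (ab + th)) * d) * dw).
      { unfold dG. replace (p b) with (p (a + d) + dp xi * (b - (a + d))) by lra.
        replace (p bb) with (p (ab + d)) by (unfold d; f_equal; ring).
        replace (a + 0) with a in E2 by ring. replace (ab + 0) with ab in E2 by ring.
        replace (b - (a + d)) with dw by (unfold dw, wb, wa, d; ring).
        replace (p (a + d)) with (p (ab + d) + (p a - p ab) + (dp (a + th) - dp (ab + th)) * (d - 0)) by lra.
        ring. }
      assert (Hq : Rabs (- (dp (a + th) - dp (ab + th)) * d * dw) <= D2 * A * (K * dx) * (A + B)).
      { rewrite !Rabs_mult, Rabs_Ropp. apply Rmult_le_compat; try apply Rabs_pos.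
        apply Rmult_le_pos; apply Rabs_pos.
        apply Rmult_le_compat; try apply Rabs_pos; auto. auto. }
      assert (0 <= - dp xi * dw ^ 2) by (pose proof (pow2_ge_0 dw); nra).
      apply abs_le_inv in Hq.
      assert (dG * dw >= - (D2 * A * (K * dx) * (A + B))) by lra.
      apply Rle_trans with (k * (- (D2 * A * (K * dx) * (A + B)))).
      2: { apply Rmult_le_compat_l; lra. }
      replace (k * - (D2 * A * (K * dx) * (A + B))) with (- (lam / 2) * (D2 * K) * (A * (A + B))) by (rewrite <- Hkdx; ring).
      assert (A * (A + B) <= 3/2 * W) by (rewrite HWAB; pose proof (pow2_ge_0 (A - B)); nra).
      assert (0 <= D2 * K) by (apply Rmult_le_pos; auto).
      assert (0 <= A * (A + B)) by nra.
      assert (0 <= D1 / c) by (apply Rmult_le_pos; [auto| left; apply Rinv_0_lt_compat; lra]).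
      assert (lam / 2 * (D2 * K) * (A * (A + B)) <= L * K * (3/2 * D2 + 2 * D1 / c) * W).
      { apply Rle_trans with (L / 2 * (D2 * K) * (3/2 * W)).
        apply Rmult_le_compat; try lra. apply Rmult_le_pos; lra.
        apply Rmult_le_compat_r; lra.
        assert (0 <= L * K * (2 * D1 / c) * W) by (apply Rmult_le_pos; [apply Rmult_le_pos|]; lra).
        assert (0 <= L * K * D2 * W) by (apply Rmult_le_pos; [apply Rmult_le_pos|]; lra). lra. }
      lra.
    -
      apply Rnot_le_lt in Hs.
      assert (HKpos : 0 < K) by (destruct (Rle_lt_or_eq_dec 0 K HK); auto; subst; lra).
      assert (Hkb : k <= L * K / c).
      { unfold k. apply (Rmult_le_reg_r (2*dx*c)). apply Rmult_lt_0_compat; lra.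
        replace (lam/(2*dx)*(2*dx*c)) with (lam*c) by (field; lra).
        replace (L*K/c*(2*dx*c)) with (L*(2*K*dx)) by (field; lra).
        assert (c <= 2*K*dx) by lra. nra. }
      assert (HdG : Rabs dG <= D1 * (A + B)).
      { unfold dG. unfold Rminus at 1.
        apply Rle_trans with (Rabs (- (p b - p bb)) + Rabs (p a - p ab)). apply Rabs_triang.
        rewrite Rabs_Ropp.
        pose proof (L_lipp p dp d2p c M D1 b bb Hp Hc Hd1 Hb Hbb).
        pose proof (L_lipp p dp d2p c M D1 a ab Hp Hc Hd1 Ha Hab).
        unfold A, B, wa, wb. lra. }
      assert (Hprod : Rabs (dG * dw) <= 2 * D1 * W).
      { rewrite Rabs_mult. apply Rle_trans with (D1 * (A + B) * (A + B)).
        apply Rmult_le_compat; try apply Rabs_pos; auto.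
        rewrite HWAB. pose proof (pow2_ge_0 (A - B)). nra. }
      apply abs_le_inv in Hprod.
      assert (0 <= D1 / c) by (apply Rmult_le_pos; [auto| left; apply Rinv_0_lt_compat; lra]).
      assert (k * (dG * dw) >= - (k * (2 * D1 * W))) by nra.
      assert (k * (2 * D1 * W) <= L * K / c * (2 * D1 * W)) by (apply Rmult_le_compat_r; [nra| auto]).
      assert (L * K / c * (2 * D1 * W) = L * K * (2 * D1 / c) * W) by (field; lra).
      assert (0 <= L * K * (3/2 * D2) * W) by (apply Rmult_le_pos; [apply Rmult_le_pos|]; lra).
      nra. }
  assert (0 <= L * K * (D2 / 2) * W) by (apply Rmult_le_pos; [apply Rmult_le_pos|]; lra).
  change (- (p b - p bb - dp bb * wb) - - (p a - p ab - dp ab * wa)) with (Rb - Ra).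
  rewrite Rmult_plus_distr_l.
  assert (- (L * K * (2 * D2 + 2 * D1 / c)) * W = - (L * K * (3/2 * D2 + 2 * D1 / c)) * W - (L * K * D2 / 2) * W) by (field; lra).
  lra.
Qed.

Lemma young s a b : 0 < s -> a * b <= s / 4 * a ^ 2 + b ^ 2 / s.
Proof.
  intros Hs. assert (0 <= (s * a - 2 * b) ^ 2) by apply pow2_ge_0.
  apply (Rmult_le_reg_l (4 * s)); [lra|].
  replace (4 * s * (s / 4 * a ^ 2 + b ^ 2 / s)) with (s ^ 2 * a ^ 2 + 4 * b ^ 2) by (field; lra).
  nra.
Qed.

Definition FlR (p dp : R -> R) (lam dx eps x0 x1 y0 y1 u0 u1 z0 z1 : R) : R :=
  - ((u0 - z0) * (p x1 - p y1) + (p x0 - p y0) * (u1 - z1)) / (2 * dx)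
  + eps ^ 2 * (lam / (2 * dx)) * ((u0 - z0) * ((u1 - z1) - (u0 - z0)))
  + lam / (2 * dx) * (- (p x0 - p y0) * (x1 - x0) + dp y0 * (x0 - y0) * (y1 - y0)).

Lemma site p dp d2p c M D1 D2 K L lam dx eps sigma
  t0 t1 t2 tb0 tb1 tb2 u0 u1 u2 ub0 ub1 ub2 Pbm2 Pbp2 du1 dtau1 dtaub1 dub1 Y :
  HypP p dp d2p -> 0 < c -> c < M -> 0 <= D1 -> 0 <= D2 -> 0 <= K -> 0 <= lam <= L ->
  0 < dx -> dx <= 1 -> 0 < eps -> 0 < sigma ->
  (forall x, c<=x<=M -> Rabs (dp x) <= D1) -> (forall x, c/2<=x<=M+c/2 -> Rabs (d2p x) <= D2) ->
  c <= t0 <= M -> c <= t1 <= M -> c <= t2 <= M -> c <= tb0 <= M -> c <= tb1 <= M -> c <= tb2 <= M ->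
  Rabs (tb1 - tb0) <= K * dx ->
  Rabs ((Pbp2 - 2 * p tb1 + Pbm2) / (2 * dx) ^ 2) <= K ->
  sigma * ub2 = - (Pbp2 - p tb1) / (2 * dx) ->
  sigma * ub1 = - (p tb2 - p tb0) / (2 * dx) ->
  sigma * ub0 = - (p tb1 - Pbm2) / (2 * dx) ->
  du1 = lam / (2 * dx) * (u2 - 2 * u1 + u0) - 1 / (2 * eps ^ 2 * dx) * (p t2 - p t0) - sigma / eps ^ 2 * u1 ->
  dtau1 = (u2 - u0) / (2 * dx) + lam / (2 * dx) * (t2 - 2 * t1 + t0) ->
  dtaub1 = (ub2 - ub0) / (2 * dx) + lam / (2 * dx) * (tb2 - 2 * tb1 + tb0) ->
  sigma * dub1 = - Y ->
  dx * (eps ^ 2 / 2 * (2 * (u1 - ub1) * (du1 - dub1)) - ((p t1 - p tb1) * dtau1 - dp tb1 * (t1 - tb1) * dtaub1))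
  <= dx * (FlR p dp lam dx eps t1 t2 tb1 tb2 u1 u2 ub1 ub2 - FlR p dp lam dx eps t0 t1 tb0 tb1 u0 u1 ub0 ub1)
     + (D2 * K / sigma + L * K * (2 * D2 + 2 * D1 / c)) * dx * ((t0 - tb0) ^ 2 + (t1 - tb1) ^ 2)
     + eps ^ 4 * dx * (L ^ 2 / (4 * sigma) * ((ub2 - 2 * ub1 + ub0) / dx ^ 2) ^ 2 + Y ^ 2 / sigma ^ 3).
Proof.
  intros Hp Hc HcM HD1 HD2 HK Hlam Hdx Hdx1 Heps Hsig Hd1 Hd2 Ht0 Ht1 Ht2 Htb0 Htb1 Htb2 HDx HA
    Hub2 Hub1 Hub0 Hdu Hdtau Hdtaub Hdub.
  set (k := lam / (2 * dx)).
  set (v0 := u0 - ub0). set (v1 := u1 - ub1).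
  set (Aq := (ub2 - ub0) / (2 * dx)).
  set (X := (ub2 - 2 * ub1 + ub0) / dx ^ 2).
  set (Vq := (-(p t1 - p tb1) + (p t0 - p tb0)) * (t1 - t0) - (-(dp tb1)*(t1 - tb1) + dp tb0 * (t0 - tb0)) * (tb1 - tb0)).
  assert (Eid : eps ^ 2 / 2 * (2 * v1 * (du1 - dub1)) - ((p t1 - p tb1) * dtau1 - dp tb1 * (t1 - tb1) * dtaub1)
    = (FlR p dp lam dx eps t1 t2 tb1 tb2 u1 u2 ub1 ub2 - FlR p dp lam dx eps t0 t1 tb0 tb1 u0 u1 ub0 ub1)
      - eps ^ 2 * k * (v1 - v0) ^ 2 + eps ^ 2 * (lam / 2 * dx) * v1 * X - sigma * v1 ^ 2
      - eps ^ 2 * v1 * dub1 - ((p t1 - p tb1) - dp tb1 * (t1 - tb1)) * Aq - k * Vq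
      - v1 * (sigma * ub1 + (p tb2 - p tb0) / (2 * dx))).
  { rewrite Hdu, Hdtau, Hdtaub. unfold FlR, k, v0, v1, Aq, X, Vq. field. lra. }
  rewrite Eid. clear Eid.
  rewrite Hub1. replace (- (p tb2 - p tb0) / (2 * dx) + (p tb2 - p tb0) / (2 * dx)) with 0 by (field; lra).
  assert (Hk0 : 0 <= k) by (unfold k; apply Rmult_le_pos; [lra| left; apply Rinv_0_lt_compat; lra]).
  assert (P1 : 0 <= eps ^ 2 * k * (v1 - v0) ^ 2).
  { apply Rmult_le_pos; [apply Rmult_le_pos; [apply pow2_ge_0| auto]| apply pow2_ge_0]. }
  assert (P2 : eps ^ 2 * (lam / 2 * dx) * v1 * X <= sigma / 4 * v1 ^ 2 + eps ^ 4 * (L ^ 2 / (4 * sigma) * X ^ 2)).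
  { replace (eps ^ 2 * (lam / 2 * dx) * v1 * X) with (v1 * (eps ^ 2 * lam * dx * X / 2)) by field.
    eapply Rle_trans. apply (young sigma); auto.
    apply Rplus_le_compat_l.
    replace ((eps ^ 2 * lam * dx * X / 2) ^ 2 / sigma) with (eps ^ 4 * ((lam * dx) ^ 2 / (4 * sigma) * X ^ 2)) by (field; lra).
    apply Rmult_le_compat_l. apply pow_le; lra.
    apply Rmult_le_compat_r. apply pow2_ge_0.
    unfold Rdiv. apply Rmult_le_compat_r. left; apply Rinv_0_lt_compat; lra.
    apply pow_incr. split. apply Rmult_le_pos; lra.
    assert (lam * dx <= lam * 1) by (apply Rmult_le_compat_l; lra). lra. }
  assert (P3 : - eps ^ 2 * v1 * dub1 <= sigma / 4 * v1 ^ 2 + eps ^ 4 * (Y ^ 2 / sigma ^ 3)).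
  { assert (dub1 = - Y / sigma) by (apply (Rmult_eq_reg_l sigma); [rewrite Hdub; field|]; lra).
    rewrite H. replace (- eps ^ 2 * v1 * (- Y / sigma)) with (v1 * (eps ^ 2 * Y / sigma)) by (field; lra).
    eapply Rle_trans. apply (young sigma); auto.
    right. f_equal. field. lra. }
  assert (P4 : - (((p t1 - p tb1) - dp tb1 * (t1 - tb1)) * Aq) <= D2 * K / sigma * (t1 - tb1) ^ 2).
  { pose proof (L_taylor p dp d2p c M D2 t1 tb1 Hp Hc HcM Hd2 Ht1 Htb1) as HT.
    assert (HAq : Rabs Aq <= K / sigma).
    { assert (Aq = - ((Pbp2 - 2 * p tb1 + Pbm2) / (2 * dx) ^ 2) / sigma).
      { unfold Aq. apply (Rmult_eq_reg_l (sigma * (2 * dx))). 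
        replace (sigma * (2 * dx) * ((ub2 - ub0) / (2 * dx))) with (sigma * ub2 - sigma * ub0) by (field; lra).
        rewrite Hub2, Hub0. field. lra. apply Rmult_integral_contrapositive; split; lra. }
      rewrite H. unfold Rdiv at 1. rewrite Rabs_mult, Rabs_Ropp, Rabs_inv, (Rabs_right sigma) by lra.
      unfold Rdiv. apply Rmult_le_compat_r. left; apply Rinv_0_lt_compat; lra. auto. }
    assert (Rabs (-(((p t1 - p tb1) - dp tb1 * (t1 - tb1)) * Aq)) <= D2 * (t1 - tb1) ^ 2 * (K / sigma)).
    { rewrite Rabs_Ropp, Rabs_mult. apply Rmult_le_compat; try apply Rabs_pos; auto. }
    apply abs_le_inv in H. 
    replace (D2 * K / sigma * (t1 - tb1) ^ 2) with (D2 * (t1 - tb1) ^ 2 * (K / sigma)) by (field; lra). lra. }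
  assert (P5 : - (k * Vq) <= L * K * (2 * D2 + 2 * D1 / c) * ((t0 - tb0) ^ 2 + (t1 - tb1) ^ 2)).
  { pose proof (L_visc p dp d2p c M D1 D2 K L lam dx t0 t1 tb0 tb1 Hp Hc HcM HD1 HD2 HK Hlam Hdx Hd1 Hd2
      Ht0 Ht1 Htb0 Htb1 HDx). unfold k, Vq. lra. }
  assert (Hv : 0 <= sigma / 2 * v1 ^ 2) by (apply Rmult_le_pos; [lra| apply pow2_ge_0]).
  assert (HW : 0 <= D2 * K / sigma * (t0 - tb0) ^ 2).
  { apply Rmult_le_pos; [|apply pow2_ge_0]. unfold Rdiv. apply Rmult_le_pos; [apply Rmult_le_pos; auto| left; apply Rinv_0_lt_compat; lra]. }
  assert (Eexp : forall a b, a * b = b * a) by (intros; ring).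
  replace (- eps ^ 2 * v1 * dub1) with (- (eps ^ 2 * v1 * dub1)) in P3 by ring.
  assert (LHS : (FlR p dp lam dx eps t1 t2 tb1 tb2 u1 u2 ub1 ub2 - FlR p dp lam dx eps t0 t1 tb0 tb1 u0 u1 ub0 ub1)
      - eps ^ 2 * k * (v1 - v0) ^ 2 + eps ^ 2 * (lam / 2 * dx) * v1 * X - sigma * v1 ^ 2
      - eps ^ 2 * v1 * dub1 - ((p t1 - p tb1) - dp tb1 * (t1 - tb1)) * Aq - k * Vq - v1 * 0
    <= (FlR p dp lam dx eps t1 t2 tb1 tb2 u1 u2 ub1 ub2 - FlR p dp lam dx eps t0 t1 tb0 tb1 u0 u1 ub0 ub1)
     + (D2 * K / sigma + L * K * (2 * D2 + 2 * D1 / c)) * ((t0 - tb0) ^ 2 + (t1 - tb1) ^ 2)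
     + eps ^ 4 * (L ^ 2 / (4 * sigma) * X ^ 2 + Y ^ 2 / sigma ^ 3)) by lra.
  apply Rmult_le_compat_l with (r := dx) in LHS; [|lra].
  unfold X in LHS. eapply Rle_trans; [apply LHS|]. unfold X; right; ring.
Qed.

Definition Zint (f : Z -> R) (a : Z) (n : nat) : R := sum_f_R0 (fun k => f (a + Z.of_nat k)%Z) n.

Lemma Zfinsum_Zint N f : Zfinsum N f = Zint f (- Z.of_nat N)%Z (2 * N).
Proof. unfold Zfinsum, Zint. apply sum_eq. intros k _. f_equal. lia. Qed.

Lemma Zint_S f a n : Zint f a (S n) = Zint f a n + f (a + Z.of_nat (S n))%Z.
Proof. unfold Zint. rewrite tech5. reflexivity. Qed.

Lemma Zint_Sl f a n : Zint f a (S n) = f a + Zint f (a + 1)%Z n.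
Proof.
  unfold Zint. rewrite decomp_sum by lia. simpl pred. rewrite Z.add_0_r. f_equal.
  apply sum_eq. intros k _. f_equal. lia.
Qed.

Lemma Zint_le f g a n : (forall i, f i <= g i) -> Zint f a n <= Zint g a n.
Proof. intros H. unfold Zint. apply sum_Rle. intros; apply H. Qed.

Lemma Zint_plus f g a n : Zint (fun i => f i + g i) a n = Zint f a n + Zint g a n.
Proof. unfold Zint. induction n; simpl; [ring| rewrite IHn; ring]. Qed.

Lemma Zint_scal (r : R) f a n : Zint (fun i => r * f i) a n = r * Zint f a n.
Proof. unfold Zint. induction n; simpl; [ring| rewrite IHn; ring]. Qed.

Lemma Zint_nonneg f a n : (forall i, 0 <= f i) -> 0 <= Zint f a n.
Proof. intros H. unfold Zint. apply cond_pos_sum. intros; apply H. Qed.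

Lemma Zint_mono f a n : (forall i, 0 <= f i) -> Zint f a n <= Zint f a (S n).
Proof. intros H. rewrite Zint_S. pose proof (H (a + Z.of_nat (S n))%Z). lra. Qed.

Lemma Zint_tele F a n : Zint (fun i => F (i + 1)%Z - F i) a n = F (a + Z.of_nat n + 1)%Z - F a.
Proof.
  induction n.
  - unfold Zint; simpl. replace (a + 0)%Z with a by lia. ring.
  - rewrite Zint_S, IHn. replace (a + Z.of_nat (S n))%Z with (a + Z.of_nat n + 1)%Z by lia. ring.
Qed.

Lemma Zint_shift f j a n : Zint (fun i => f (i + j)%Z) a n = Zint f (a + j)%Z n.
Proof. unfold Zint. apply sum_eq. intros. f_equal. lia. Qed.

Lemma Zfinsum_plus f g N : Zfinsum N (fun i => f i + g i) = Zfinsum N f + Zfinsum N g.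
Proof. rewrite !Zfinsum_Zint. apply Zint_plus. Qed.
Lemma Zfinsum_scal r f N : Zfinsum N (fun i => r * f i) = r * Zfinsum N f.
Proof. rewrite !Zfinsum_Zint. apply Zint_scal. Qed.
Lemma Zfinsum_le f g N : (forall i, f i <= g i) -> Zfinsum N f <= Zfinsum N g.
Proof. rewrite !Zfinsum_Zint. apply Zint_le. Qed.
Lemma Zfinsum_nonneg f N : (forall i, 0 <= f i) -> 0 <= Zfinsum N f.
Proof. rewrite !Zfinsum_Zint. apply Zint_nonneg. Qed.

Lemma Zfinsum_tele F N : Zfinsum N (fun i => F (i + 1)%Z - F i) = F (Z.of_nat N + 1)%Z - F (- Z.of_nat N)%Z.
Proof. rewrite Zfinsum_Zint, Zint_tele. f_equal. f_equal. lia. Qed.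

Lemma Zfinsum_S f N : Zfinsum (S N) f = f (- Z.of_nat (S N))%Z + Zfinsum N f + f (Z.of_nat (S N)).
Proof.
  rewrite !Zfinsum_Zint. replace (2 * S N)%nat with (S (S (2 * N))) by lia.
  rewrite Zint_S, Zint_Sl. replace (- Z.of_nat (S N) + 1)%Z with (- Z.of_nat N)%Z by lia.
  f_equal. f_equal. lia.
Qed.

Lemma Zfinsum_mono f N : (forall i, 0 <= f i) -> Zfinsum N f <= Zfinsum (S N) f.
Proof. intros H. rewrite Zfinsum_S. pose proof (H (- Z.of_nat (S N))%Z). pose proof (H (Z.of_nat (S N))). lra. Qed.

Lemma Zfinsum_shiftm1 f N : (forall i, 0 <= f i) -> Zfinsum N (fun i => f (i - 1)%Z) <= Zfinsum (S N) f.
Proof.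
  intros H. rewrite !Zfinsum_Zint.
  replace (Zint (fun i => f (i - 1)%Z) (- Z.of_nat N) (2 * N)) with (Zint f (- Z.of_nat (S N)) (2 * N)).
  2:{ unfold Zint. apply sum_eq. intros. f_equal. lia. }
  replace (2 * S N)%nat with (S (S (2 * N))) by lia.
  apply Rle_trans with (Zint f (- Z.of_nat (S N)) (S (2 * N))); apply Zint_mono; auto.
Qed.

Lemma Zfinsum_cv f l : Zsum f l -> forall e, 0 < e -> exists N0, forall N, (N0 <= N)%nat -> Rabs (Zfinsum N f - l) < e.
Proof.
  intros [l1 [l2 [H1 [H2 E]]]] e He.
  assert (Eq : forall n, Zfinsum (S n) f = sum_f_R0 (fun n => f (Z.of_nat n)) (S n) + sum_f_R0 (fun n => f (- Z.of_nat (S n))%Z) n).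
  { induction n.
    - rewrite Zfinsum_S. unfold Zfinsum. simpl. replace (Z.of_nat 0 - Z.of_nat 0)%Z with 0%Z by lia. simpl. ring.
    - rewrite Zfinsum_S, IHn. rewrite (tech5 (fun n => f (Z.of_nat n)) (S n)), (tech5 (fun n => f (- Z.of_nat (S n))%Z) n). ring. }
  destruct (H1 (e/2) ltac:(lra)) as [N1 HN1]. destruct (H2 (e/2) ltac:(lra)) as [N2 HN2].
  exists (S (N1 + N2)). intros N HN. destruct N as [|n]; [lia|].
  rewrite Eq, E. unfold Rdist in *.
  specialize (HN1 (S n) ltac:(lia)). specialize (HN2 n ltac:(lia)).
  replace (sum_f_R0 (fun n0 : nat => f (Z.of_nat n0)) (S n) + sum_f_R0 (fun n0 : nat => f (- Z.of_nat (S n0))%Z) n - (l1 + l2))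
    with ((sum_f_R0 (fun n0 : nat => f (Z.of_nat n0)) (S n) - l1) + (sum_f_R0 (fun n0 : nat => f (- Z.of_nat (S n0))%Z) n - l2)) by ring.
  eapply Rle_lt_trans. apply Rabs_triang. lra.
Qed.

Lemma int_ge_const f a b c0 (pr : Riemann_integrable f a b) : a <= b ->
  (forall x, a < x < b -> c0 <= f x) -> c0 * (b - a) <= RiemannInt pr.
Proof.
  intros Hab H. rewrite <- (RiemannInt_P15 (RiemannInt_P14 a b c0)).
  apply RiemannInt_P19; auto.
Qed.


Lemma gronwall (T t C0 : R) (psi : R -> R) (Sf : nat -> R -> R)
  (Hint : forall N s, 0 <= s < T -> Riemann_integrable (Sf N) 0 s) :
  0 <= t < T ->
  within_cont psi T 0 ->
  (forall s, 0 < s < T -> forall d, 0 < d -> exists N l, derivable_pt_lim psi s l /\ l <= Sf N s + d) ->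
  (forall N s, 0 <= s < T -> 0 <= Sf N s) ->
  (forall N s, 0 <= s < T -> Sf N s <= Sf (S N) s) ->
  (forall N s, 0 < s < T -> continuity_pt (Sf N) s) ->
  (forall N s, 0 <= s < T -> Rint (Sf N) 0 s <= C0) ->
  psi t <= psi 0 + C0.
Proof.
  intros Ht Hc0 Hder Hpos Hmon Hcont Hbd.
  set (Lam := fun N s => Rint (Sf N) 0 s).
  assert (Hmon2 : forall N N' s, (N <= N')%nat -> 0 <= s < T -> Sf N s <= Sf N' s).
  { intros N N' s HN Hs. induction HN; [lra| eapply Rle_trans; [apply IHHN| apply Hmon; auto]]. }
  assert (Lsplit : forall N a b, 0 <= a <= b -> b < T -> forall pr : Riemann_integrable (Sf N) a b,
     Lam N b = Lam N a + RiemannInt pr).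
  { intros N a b Hab HbT pr. unfold Lam.
    rewrite (Rint_val _ _ _ (Hint N b ltac:(lra))), (Rint_val _ _ _ (Hint N a ltac:(lra))).
    symmetry; apply RiemannInt_P26. }
  assert (Lmon : forall N a b, 0 <= a <= b -> b < T -> Lam N a <= Lam N b).
  { intros N a b Hab HbT.
    assert (Hb' : 0 <= b < T) by lra.
    pose (pr := @RiemannInt_P23 (Sf N) 0 b a (Hint N b Hb') Hab).
    rewrite (Lsplit N a b Hab HbT pr).
    pose proof (int_ge_const (Sf N) a b 0 pr ltac:(lra)).
    assert (0 * (b - a) <= RiemannInt pr) by (apply H; intros; apply Hpos; lra).
    lra. }
  assert (L0 : forall N, Lam N 0 = 0).
  { intros N. unfold Lam. rewrite (Rint_val _ _ _ (RiemannInt_P7 (Sf N) 0)). apply RiemannInt_P9. }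
  assert (Lpos : forall N s, 0 <= s < T -> 0 <= Lam N s).
  { intros. rewrite <- (L0 N). apply Lmon; lra. }
  assert (LmonN : forall N N' s, (N <= N')%nat -> 0 <= s < T -> Lam N s <= Lam N' s).
  { intros N N' s HN Hs. unfold Lam. rewrite (Rint_val _ _ _ (Hint N s Hs)), (Rint_val _ _ _ (Hint N' s Hs)).
    apply RiemannInt_P19; [lra|]. intros; apply Hmon2; auto; lra. }
  cut (forall dl, 0 < dl -> psi t <= psi 0 + C0 + dl * (t + 2)).
  { intros H. apply Rnot_lt_le. intro Hlt.
    set (dl := (psi t - (psi 0 + C0)) / (2 * (t + 2))).
    assert (0 < dl) by (unfold dl; apply Rdiv_lt_0_compat; lra).
    specialize (H dl H0). unfold dl in H.
    assert ((psi t - (psi 0 + C0)) / (2 * (t + 2)) * (t + 2) = (psi t - (psi 0 + C0)) / 2) by (field; lra).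
    lra. }
  intros dl Hdl.
  set (Pp := fun s => forall eta, 0 < eta -> exists N, psi s <= psi 0 + Lam N s + eta + dl * (s + 1)).
  assert (Hfin : Pp t -> psi t <= psi 0 + C0 + dl * (t + 2)).
  { intros HP. destruct (HP dl Hdl) as [N HN]. specialize (Hbd N t Ht). unfold Lam in HN. lra. }
  apply Hfin. clear Hfin.
  set (Aset := fun s => 0 <= s <= t /\ forall r, 0 <= r <= s -> Pp r).
  assert (P0 : Pp 0).
  { intros eta Heta. exists 0%nat. rewrite L0. lra. }
  assert (HA0 : Aset 0).
  { split; [lra|]. intros r Hr. replace r with 0 by lra. auto. }
  destruct (completeness Aset) as [sg [Hub Hlub]].
  { exists t. intros x [Hx _]; lra. }
  { exists 0; auto. }
  assert (Hsg0 : 0 <= sg) by (apply Hub; auto).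
  assert (Hsgt : sg <= t) by (apply Hlub; intros x [Hx _]; lra).
  assert (Hbelow : forall r, 0 <= r < sg -> Pp r).
  { intros r Hr.
    destruct (classic (exists s, Aset s /\ r <= s)) as [[s [[_ Hs] Hrs]]| Hno].
    - apply Hs; lra.
    - exfalso. assert (sg <= r).
      { apply Hlub. intros x Hx. apply Rnot_lt_le. intro. apply Hno. exists x; split; auto; lra. }
      lra. }
  assert (Hsg : Pp sg).
  { destruct (Req_dec sg 0) as [E|E]; [rewrite E; auto|].
    intros eta Heta.
    assert (Hdsg : exists l, derivable_pt_lim psi sg l).
    { destruct (Hder sg ltac:(lra) 1 ltac:(lra)) as [N [l [Hl _]]]. eauto. }
    destruct Hdsg as [l Hl]. pose proof (dl_cont _ _ _ Hl) as Hcs.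
    destruct (Hcs (eta / 2) ltac:(lra)) as [al [Hal Hal2]].
    set (r := Rmax 0 (sg - al / 2)).
    assert (Hr : 0 <= r < sg) by (unfold r; apply Rmax_case_strong; intros; lra).
    destruct (Hbelow r Hr (eta / 2) ltac:(lra)) as [N HN].
    exists N.
    assert (Rabs (psi r - psi sg) < eta / 2).
    { destruct (Req_dec r sg) as [Er|Er]; [lra|].
      apply Hal2. split. unfold D_x, no_cond; split; auto.
      unfold dist; simpl; unfold Rdist. rewrite Rabs_left by lra.
      unfold r. apply Rmax_case_strong; intros; lra. }
    apply Rlt_le, abs_le_inv in H as [H1 H2].
    pose proof (Lmon N r sg ltac:(lra) ltac:(lra)). assert (dl*(r+1) <= dl*(sg+1)) by (apply Rmult_le_compat_l; lra). lra. }
  destruct (Req_dec sg t) as [Est|Nst]; [rewrite <- Est; auto|].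
  exfalso.
  assert (Hext : exists h, 0 < h /\ sg + h <= t /\ forall r, sg < r <= sg + h -> Pp r).
  { destruct (Req_dec sg 0) as [E0|E0].
    - rewrite E0 in *. destruct (Hc0 dl Hdl) as [al [Hal Hal2]].
      exists (Rmin (al / 2) t). split; [apply Rmin_case; lra|]. split; [pose proof (Rmin_r (al/2) t); lra|].
      intros r Hr. intros eta Heta. exists 0%nat.
      assert (Hr' : r <= al / 2) by (pose proof (Rmin_l (al/2) t); lra).
      assert (Hr'' : r <= t) by (pose proof (Rmin_r (al/2) t); lra).
      assert (dist R_met (psi r) (psi 0) < dl).
      { apply Hal2. split. split; lra. simpl. unfold Rdist. rewrite Rminus_0_r, Rabs_right; lra. }
      simpl in H. unfold Rdist in H. apply Rlt_le, abs_le_inv in H.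
      pose proof (Lpos 0%nat r ltac:(lra)). assert (0 <= dl * r) by (apply Rmult_le_pos; lra). lra.
    - assert (Hsgp : 0 < sg < T) by lra.
      destruct (Hder sg Hsgp (dl / 4) ltac:(lra)) as [N [l [Hl Hll]]].
      destruct (Hcont N sg Hsgp (dl / 4) ltac:(lra)) as [a1 [Ha1 Ha1']].
      destruct (Hl (dl / 4) ltac:(lra)) as [dlt Hdlt].
      set (h := Rmin (Rmin a1 dlt) (t - sg) / 2).
      assert (Hh : 0 < h).
      { unfold h. apply Rmin_case; [apply Rmin_case; [lra| pose proof (cond_pos dlt); lra]| lra]. }
      assert (Hh1 : h < a1) by (unfold h; pose proof (Rmin_l (Rmin a1 dlt) (t - sg)); pose proof (Rmin_l a1 dlt); lra).
      assert (Hh2 : h < dlt) by (unfold h; pose proof (Rmin_l (Rmin a1 dlt) (t - sg)); pose proof (Rmin_r a1 dlt); pose proof (cond_pos dlt); lra).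
      assert (Hh3 : h <= t - sg) by (unfold h; pose proof (Rmin_r (Rmin a1 dlt) (t - sg)); pose proof (Rmin_l a1 dlt); lra).
      exists h. split; [auto| split; [lra|]].
      intros r Hr eta Heta.
      set (hh := r - sg).
      assert (Hhh : 0 < hh <= h) by (unfold hh; lra).
      assert (Hpsi : psi r - psi sg <= hh * (Sf N sg + dl / 2)).
      { assert (hh <> 0) by lra. assert (Rabs hh < dlt) by (rewrite Rabs_right; lra).
        specialize (Hdlt hh H H0). replace (sg + hh) with r in Hdlt by (unfold hh; ring).
        apply Rlt_le, abs_le_inv in Hdlt as [_ Hd2].
        assert ((psi r - psi sg) / hh <= Sf N sg + dl / 2) by lra.
        apply (Rmult_le_compat_l hh) in H1; [|lra].
        replace (hh * ((psi r - psi sg) / hh)) with (psi r - psi sg) in H1 by (field; lra). lra. }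
      destruct (Hsg eta Heta) as [N' HN'].
      set (N'' := Nat.max N N').
      assert (Hr' : 0 <= r < T) by lra.
      pose (pr := @RiemannInt_P23 (Sf N'') 0 r sg (Hint N'' r Hr') ltac:(lra)).
      assert (Hsp := Lsplit N'' sg r ltac:(lra) ltac:(lra) pr).
      assert (Hge : (Sf N sg - dl / 4) * (r - sg) <= RiemannInt pr).
      { apply int_ge_const; [lra|]. intros x Hx.
        assert (Sf N x <= Sf N'' x) by (apply Hmon2; [unfold N''; lia| lra]).
        assert (Rabs (Sf N x - Sf N sg) < dl / 4).
        { destruct (Req_dec x sg); [subst; rewrite Rminus_diag, Rabs_R0; lra|].
          apply (Ha1' x). split. split; [exact I| auto]. simpl. unfold Rdist. rewrite Rabs_right; lra. }
        apply Rlt_le, abs_le_inv in H0. lra. }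
      assert (Lam N' sg <= Lam N'' sg) by (apply LmonN; [unfold N''; lia| lra]).
      exists N''. fold hh in Hge.
      assert (dl * (sg + 1) + 3 / 4 * dl * hh <= dl * (r + 1)) by (unfold hh; nra).
      nra. }
  destruct Hext as [h [Hh [Hht Hr]]].
  assert (Aset (sg + h)).
  { split; [lra|]. intros r Hr'. destruct (Rlt_le_dec r sg) as [Hl|Hl].
    - apply Hbelow; lra.
    - destruct (Req_dec r sg) as [E|E]; [subst; auto| apply Hr; lra]. }
  apply Hub in H. lra.
Qed.

Ltac dset H :=
  destruct H as (Hts & HT & Heps & Hdx & Hdx1 & Hlam & HC1 & HH & HPt & HPu & Hbnd & Hlim & Hsum & HPhi & HPhi0 & HdPhi & HL2a & HLia & HLib & HLic & HL2b).

Definition gform (p dp : R -> R) eps dx (tau u taub ub dtau du dtaub dub : Z -> R -> R) i s :=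
  dx * (eps ^ 2 / 2 * (2 * (u i s - ub i s) * (du i s - dub i s)) - ((p (tau i s) - p (taub i s)) * dtau i s - dp (taub i s) * (tau i s - taub i s) * dtaub i s)).

Lemma gform_deriv p dp d2p tstar sigma c M K T eps dx lam tau u taub ub dtau du dtaub dub Phi i s :
  HypP p dp d2p -> 0 < c ->
  setting p dp tstar sigma c M K T eps dx lam tau u taub ub dtau du dtaub dub Phi ->
  0 < s < T ->
  derivable_pt_lim (fun s => dx * eta p tstar eps tau u taub ub i s) s (gform p dp eps dx tau u taub ub dtau du dtaub dub i s).
Proof.
  intros Hp Hc HS Hs. dset HS.
  destruct (HC1 i) as [[Ht1 _] [[Hu1 _] [[Htb1 _] [Hub1 _]]]].
  specialize (Ht1 s Hs). specialize (Hu1 s Hs). specialize (Htb1 s Hs). specialize (Hub1 s Hs).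
  destruct (Hbnd i s ltac:(lra)) as [Hb1 Hb2].
  unfold eta, Prel, gform.
  dtac; try (first [apply Hu1 | apply Hub1 | apply Ht1 | apply Htb1]).
  - apply (dl_comp (tau i) (Ppot p tstar)); [apply Ht1|]. apply Ppot_deriv; try lra. intros; eapply hp_cp; eauto.
  - apply (dl_comp (taub i) (Ppot p tstar)); [apply Htb1|]. apply Ppot_deriv; try lra. intros; eapply hp_cp; eauto.
  - apply (dl_comp (taub i) p); [apply Htb1|]. eapply hp_p; eauto; lra.
  - ring.
Qed.

Definition Ysrc (dp : R -> R) dx (taub dtaub : Z -> R -> R) i s :=
  Dtx_tilde dx (fun i t => dp (taub i t) * dtaub i t) i s.

Lemma dub_formula p dp d2p tstar sigma c M K T eps dx lam tau u taub ub dtau du dtaub dub Phi i s :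
  HypP p dp d2p -> 0 < c ->
  setting p dp tstar sigma c M K T eps dx lam tau u taub ub dtau du dtaub dub Phi ->
  0 < s < T -> sigma * dub i s = - Ysrc dp dx taub dtaub i s.
Proof.
  intros Hp Hc HS Hs. dset HS.
  destruct (HC1 i) as [_ [_ [_ [Hub1 _]]]]. specialize (Hub1 s Hs).
  destruct (HC1 (i+1)%Z) as [_ [_ [[Htp _] _]]]. specialize (Htp s Hs).
  destruct (HC1 (i-1)%Z) as [_ [_ [[Htm _] _]]]. specialize (Htm s Hs).
  destruct (Hbnd (i+1)%Z s ltac:(lra)) as [_ Hbp].
  destruct (Hbnd (i-1)%Z s ltac:(lra)) as [_ Hbm].
  assert (D1 : derivable_pt_lim (fun s => sigma * ub i s) s (0 * ub i s + sigma * dub i s)).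
  { apply (dl_mult (fun _ => sigma) (ub i)); [apply dl_const| auto]. }
  assert (D2 : derivable_pt_lim (fun s => sigma * ub i s) s
     (- ((dp (taub (i+1)%Z s) * dtaub (i+1)%Z s - dp (taub (i-1)%Z s) * dtaub (i-1)%Z s)) * / (2 * dx))).
  { apply (derivable_pt_lim_locally_ext (fun s => - (p (taub (i+1)%Z s) - p (taub (i-1)%Z s)) * / (2 * dx)) _ s 0 T).
    auto. intros z Hz. rewrite (HPu i z ltac:(lra)). unfold Rdiv; ring.
    dtac.
    - apply (dl_comp (taub (i+1)%Z) p); [apply Htp| eapply hp_p; eauto; lra].
    - apply (dl_comp (taub (i-1)%Z) p); [apply Htm| eapply hp_p; eauto; lra].
    - ring. }
  pose proof (uniqueness_limite _ _ _ _ D1 D2).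
  unfold Ysrc, Dtx_tilde. unfold Rdiv. lra.
Qed.

Definition FlZ p dp lam dx eps (tau u taub ub : Z -> R -> R) s i :=
  FlR p dp lam dx eps (tau (i-1)%Z s) (tau i s) (taub (i-1)%Z s) (taub i s) (u (i-1)%Z s) (u i s) (ub (i-1)%Z s) (ub i s).

Definition sZ dp eps dx sigma L (ub taub dtaub : Z -> R -> R) s i :=
  eps ^ 4 * dx * (L ^ 2 / (4 * sigma) * (Dxx dx ub i s) ^ 2 + (Ysrc dp dx taub dtaub i s) ^ 2 / sigma ^ 3).

Lemma site_Z p dp d2p tstar sigma c M K T eps dx lam tau u taub ub dtau du dtaub dub Phi D1 D2 L Kp i s :
  HypP p dp d2p -> 0 < c -> c < M -> 0 < sigma -> 0 <= D1 -> 0 <= D2 -> Rabs K <= Kp -> 0 <= lam <= L ->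
  (forall x, c<=x<=M -> Rabs (dp x) <= D1) -> (forall x, c/2<=x<=M+c/2 -> Rabs (d2p x) <= D2) ->
  setting p dp tstar sigma c M K T eps dx lam tau u taub ub dtau du dtaub dub Phi ->
  0 < s < T ->
  gform p dp eps dx tau u taub ub dtau du dtaub dub i s <=
  dx * (FlZ p dp lam dx eps tau u taub ub s (i+1)%Z - FlZ p dp lam dx eps tau u taub ub s i)
  + (D2 * Kp / sigma + L * Kp * (2 * D2 + 2 * D1 / c)) * dx * ((tau (i-1)%Z s - taub (i-1)%Z s) ^ 2 + (tau i s - taub i s) ^ 2)
  + sZ dp eps dx sigma L ub taub dtaub s i.
Proof.
  intros Hp Hc HcM Hsig HD1 HD2 HKp Hlam0 Hd1 Hd2 HS Hs.
  pose proof (dub_formula p dp d2p tstar sigma c M K T eps dx lam tau u taub ub dtau du dtaub dub Phi i s Hp Hc HS Hs) as Hdub.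
  dset HS.
  assert (HKp0 : 0 <= Kp) by (eapply Rle_trans; [apply Rabs_pos| eauto]).
  assert (HKK : K <= Kp) by (eapply Rle_trans; [apply Rle_abs| eauto]).
  destruct (HH i s Hs) as [Hdtau Hdu].
  pose proof (HPt i s Hs) as Hdtaub.
  assert (Hs' : 0 <= s < T) by lra.
  destruct (Hbnd (i-1)%Z s Hs') as [Ht0 Htb0].
  destruct (Hbnd i s Hs') as [Ht1 Htb1].
  destruct (Hbnd (i+1)%Z s Hs') as [Ht2 Htb2].
  pose proof (HPu (i+1)%Z s Hs') as Hub2. replace (i + 1 + 1)%Z with (i + 2)%Z in Hub2 by lia.
  replace (i + 1 - 1)%Z with i in Hub2 by lia.
  pose proof (HPu i s Hs') as Hub1.
  pose proof (HPu (i-1)%Z s Hs') as Hub0. replace (i - 1 + 1)%Z with i in Hub0 by lia.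
  replace (i - 1 - 1)%Z with (i - 2)%Z in Hub0 by lia.
  pose proof (HLic (i-1)%Z s Hs') as HDx. unfold Pilot.Defs.Dx in HDx. replace (i - 1 + 1)%Z with i in HDx by lia.
  assert (HDx' : Rabs (taub i s - taub (i-1)%Z s) <= Kp * dx).
  { replace (taub i s - taub (i - 1)%Z s) with ((taub i s - taub (i - 1)%Z s) / dx * dx) by (field; lra).
    rewrite Rabs_mult, (Rabs_right dx) by lra. apply Rmult_le_compat_r; lra. }
  pose proof (HLia i s Hs') as HA. unfold Dxx_tilde in HA.
  assert (HA' : Rabs ((p (taub (i + 2)%Z s) - 2 * p (taub i s) + p (taub (i - 2)%Z s)) / (2 * dx) ^ 2) <= Kp) by lra.
  pose proof (site p dp d2p c M D1 D2 Kp L lam dx eps sigma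
    (tau (i-1)%Z s) (tau i s) (tau (i+1)%Z s) (taub (i-1)%Z s) (taub i s) (taub (i+1)%Z s)
    (u (i-1)%Z s) (u i s) (u (i+1)%Z s) (ub (i-1)%Z s) (ub i s) (ub (i+1)%Z s)
    (p (taub (i-2)%Z s)) (p (taub (i+2)%Z s)) (du i s) (dtau i s) (dtaub i s) (dub i s) (Ysrc dp dx taub dtaub i s)
    Hp Hc HcM HD1 HD2 HKp0 Hlam0 Hdx Hdx1 Heps Hsig Hd1 Hd2 Ht0 Ht1 Ht2 Htb0 Htb1 Htb2 HDx' HA'
    Hub2 Hub1 Hub0 Hdu Hdtau Hdtaub Hdub) as Hsite.
  unfold gform, FlZ, sZ, Dxx. replace (i + 1 - 1)%Z with i by lia. exact Hsite.
Qed.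

Lemma cv_eqv u l1 l2 : Un_cv u l1 -> l1 = l2 -> Un_cv u l2.
Proof. intros; subst; auto. Qed.
Lemma cv_ext u v l : (forall n, u n = v n) -> Un_cv u l -> Un_cv v l.
Proof. intros E H e He. destruct (H e He) as [N HN]. exists N. intros n Hn. rewrite <- E. auto. Qed.
Lemma cv_const (a : R) : Un_cv (fun _ => a) a.
Proof. intros e He. exists 0%nat. intros. unfold Rdist. rewrite Rminus_diag, Rabs_R0. auto. Qed.
Lemma cv_plus f g a b : Un_cv f a -> Un_cv g b -> Un_cv (fun n => f n + g n) (a + b).
Proof. apply CV_plus. Qed.
Lemma cv_minus f g a b : Un_cv f a -> Un_cv g b -> Un_cv (fun n => f n - g n) (a - b).
Proof. apply CV_minus. Qed.
Lemma cv_mult f g a b : Un_cv f a -> Un_cv g b -> Un_cv (fun n => f n * g n) (a * b).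
Proof. apply CV_mult. Qed.
Lemma cv_opp f a : Un_cv f a -> Un_cv (fun n => - f n) (- a).
Proof. apply CV_opp. Qed.
Lemma cv_div f a (c : R) : Un_cv f a -> Un_cv (fun n => f n / c) (a / c).
Proof. intros H. unfold Rdiv. apply (cv_mult f (fun _ => / c)); auto. apply cv_const. Qed.
Lemma cv_shift u l : Un_cv u l -> Un_cv (fun n => u (S n)) l.
Proof. intros H e He. destruct (H e He) as [N HN]. exists N. intros n Hn. apply HN. lia. Qed.

Ltac cvtac0 :=
 lazymatch goal with
 | |- Un_cv (fun n => @?f n + @?g n) _ => eapply cv_eqv; [apply (cv_plus f g); cvtac0| reflexivity]
 | |- Un_cv (fun n => @?f n - @?g n) _ => eapply cv_eqv; [apply (cv_minus f g); cvtac0| reflexivity]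
 | |- Un_cv (fun n => @?f n * @?g n) _ => eapply cv_eqv; [apply (cv_mult f g); cvtac0| reflexivity]
 | |- Un_cv (fun n => @?f n / ?c) _ => eapply cv_eqv; [eapply (cv_div f _ c); cvtac0| reflexivity]
 | |- Un_cv (fun n => - @?f n) _ => eapply cv_eqv; [apply (cv_opp f); cvtac0| reflexivity]
 | |- Un_cv (fun _ => ?a) _ => apply cv_const
 | _ => idtac
 end.
Ltac cvtac := eapply cv_eqv; [cvtac0|].

Lemma FlR_cv p dp lam dx eps x0 x1 y0 y1 u0 u1 z0 z1 L :
  continuity_pt p L -> continuity_pt dp L ->
  Un_cv x0 L -> Un_cv x1 L -> Un_cv y0 L -> Un_cv y1 L ->
  Un_cv u0 0 -> Un_cv u1 0 -> Un_cv z0 0 -> Un_cv z1 0 ->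
  Un_cv (fun n => FlR p dp lam dx eps (x0 n) (x1 n) (y0 n) (y1 n) (u0 n) (u1 n) (z0 n) (z1 n)) 0.
Proof.
  intros Cp Cdp H1 H2 H3 H4 H5 H6 H7 H8. unfold FlR.
  cvtac; try eassumption; try (apply (continuity_seq p); eassumption);
    try (apply (continuity_seq dp); eassumption).
  unfold Rdiv; ring.
Qed.

Lemma Fl_lims p dp d2p tstar sigma c M K T eps dx lam tau u taub ub dtau du dtaub dub Phi s :
  HypP p dp d2p ->
  setting p dp tstar sigma c M K T eps dx lam tau u taub ub dtau du dtaub dub Phi ->
  0 <= s < T ->
  Un_cv (fun n => FlZ p dp lam dx eps tau u taub ub s (Z.of_nat n + 1)%Z) 0 /\
  Un_cv (fun n => FlZ p dp lam dx eps tau u taub ub s (- Z.of_nat n)%Z) 0.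
Proof.
  intros Hp HS Hs. dset HS.
  destruct Hlim as [taum [taup [Hm [Hpp Hl]]]].
  destruct (Hl s Hs) as (L1 & L2 & L3 & L4 & L5 & L6 & L7 & L8).
  split.
  - eapply cv_ext.
    2: apply (FlR_cv p dp lam dx eps (fun n => tau (Z.of_nat n) s) (fun n => tau (Z.of_nat (S n)) s)
           (fun n => taub (Z.of_nat n) s) (fun n => taub (Z.of_nat (S n)) s)
           (fun n => u (Z.of_nat n) s) (fun n => u (Z.of_nat (S n)) s)
           (fun n => ub (Z.of_nat n) s) (fun n => ub (Z.of_nat (S n)) s) taup);
      try (apply (cv_shift (fun n => tau (Z.of_nat n) s)); auto);
      try (apply (cv_shift (fun n => taub (Z.of_nat n) s)); auto);
      try (apply (cv_shift (fun n => u (Z.of_nat n) s)); auto);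
      try (apply (cv_shift (fun n => ub (Z.of_nat n) s)); auto); auto;
      [apply (hp_cp p dp d2p); auto| apply (hp_cdp p dp d2p); auto].
    intros n. unfold FlZ. replace (Z.of_nat n + 1 - 1)%Z with (Z.of_nat n) by lia.
    replace (Z.of_nat (S n)) with (Z.of_nat n + 1)%Z by lia. reflexivity.
  - eapply cv_ext.
    2: apply (FlR_cv p dp lam dx eps (fun n => tau (- Z.of_nat (S n))%Z s) (fun n => tau (- Z.of_nat n)%Z s)
           (fun n => taub (- Z.of_nat (S n))%Z s) (fun n => taub (- Z.of_nat n)%Z s)
           (fun n => u (- Z.of_nat (S n))%Z s) (fun n => u (- Z.of_nat n)%Z s)
           (fun n => ub (- Z.of_nat (S n))%Z s) (fun n => ub (- Z.of_nat n)%Z s) taum);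
      try (apply (cv_shift (fun n => tau (- Z.of_nat n)%Z s)); auto);
      try (apply (cv_shift (fun n => taub (- Z.of_nat n)%Z s)); auto);
      try (apply (cv_shift (fun n => u (- Z.of_nat n)%Z s)); auto);
      try (apply (cv_shift (fun n => ub (- Z.of_nat n)%Z s)); auto); auto;
      [apply (hp_cp p dp d2p); auto| apply (hp_cdp p dp d2p); auto].
    intros n. unfold FlZ. replace (- Z.of_nat n - 1)%Z with (- Z.of_nat (S n))%Z by lia. reflexivity.
Qed.

Lemma eta_lb p dp d2p tstar sigma c M K T eps dx lam tau u taub ub dtau du dtaub dub Phi m i s :
  HypP p dp d2p -> 0 < c -> 0 < m -> (forall x, c<=x<=M -> m <= - dp x) ->
  setting p dp tstar sigma c M K T eps dx lam tau u taub ub dtau du dtaub dub Phi ->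
  0 <= s < T ->
  dx * (m / 2) * (tau i s - taub i s) ^ 2 <= dx * eta p tstar eps tau u taub ub i s /\
  0 <= dx * (m / 2) * (tau i s - taub i s) ^ 2.
Proof.
  intros Hp Hc Hm Hmb HS Hs. dset HS.
  destruct (Hbnd i s Hs) as [H1 H2].
  pose proof (L_prel p dp d2p tstar c M m (tau i s) (taub i s) Hp Hts Hc Hmb H1 H2).
  unfold eta.
  assert (0 <= eps ^ 2 / 2 * (u i s - ub i s) ^ 2).
  { apply Rmult_le_pos. apply Rmult_le_pos. apply pow2_ge_0. lra. apply pow2_ge_0. }
  split.
  - rewrite Rmult_assoc. apply Rmult_le_compat_l; lra.
  - apply Rmult_le_pos. apply Rmult_le_pos; lra. apply pow2_ge_0.
Qed.

Lemma Phi_nonneg p dp d2p tstar sigma c M K T eps dx lam tau u taub ub dtau du dtaub dub Phi m s :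
  HypP p dp d2p -> 0 < c -> 0 < m -> (forall x, c<=x<=M -> m <= - dp x) ->
  setting p dp tstar sigma c M K T eps dx lam tau u taub ub dtau du dtaub dub Phi ->
  0 <= s < T -> 0 <= Phi s.
Proof.
  intros Hp Hc Hm Hmb HS Hs.
  assert (He : forall i, 0 <= dx * eta p tstar eps tau u taub ub i s).
  { intros i. pose proof (eta_lb p dp d2p tstar sigma c M K T eps dx lam tau u taub ub dtau du dtaub dub Phi m i s Hp Hc Hm Hmb HS Hs). lra. }
  pose proof HS as HS'. dset HS'. clear Hsum.
  pose proof (Zfinsum_cv _ _ (HPhi s Hs)).
  apply Rnot_lt_le. intro Hlt.
  destruct (H (- Phi s) ltac:(lra)) as [N0 HN]. specialize (HN N0 (le_n _)).
  pose proof (Zfinsum_nonneg _ N0 He).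
  pose proof (Rle_abs (Zfinsum N0 (fun i => dx * eta p tstar eps tau u taub ub i s) - Phi s)). lra.
Qed.

Lemma dphi_bound p dp d2p tstar sigma c M K T eps dx lam tau u taub ub dtau du dtaub dub Phi D1 m D2 L Kp s g l :
  HypP p dp d2p -> 0 < c -> c < M -> 0 < sigma -> 0 < m -> 0 <= D1 -> 0 <= D2 -> Rabs K <= Kp -> 0 <= lam <= L ->
  (forall x, c<=x<=M -> m <= - dp x /\ Rabs (dp x) <= D1) -> (forall x, c/2<=x<=M+c/2 -> Rabs (d2p x) <= D2) ->
  setting p dp tstar sigma c M K T eps dx lam tau u taub ub dtau du dtaub dub Phi ->
  0 < s < T ->
  (forall i, derivable_pt_lim (fun s => dx * eta p tstar eps tau u taub ub i s) s (g i)) -> Zsum g l ->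
  forall dl, 0 < dl -> exists N,
    l <= 2 * (2 * (D2 * Kp / sigma + L * Kp * (2 * D2 + 2 * D1 / c)) / m) * Phi s
         + Zfinsum N (sZ dp eps dx sigma L ub taub dtaub s) + dl.
Proof.
  intros Hp Hc HcM Hsig Hm HD1 HD2 HKp Hlam0 Hd1 Hd2 HS Hs Hg Hl dl Hdl.
  assert (Hmb : forall x, c<=x<=M -> m <= - dp x) by (intros; apply Hd1; auto).
  assert (Hd1' : forall x, c<=x<=M -> Rabs (dp x) <= D1) by (intros; apply Hd1; auto).
  assert (HKp0 : 0 <= Kp) by (eapply Rle_trans; [apply Rabs_pos| eauto]).
  set (C3 := D2 * Kp / sigma + L * Kp * (2 * D2 + 2 * D1 / c)).
  assert (HC3 : 0 <= C3).
  { unfold C3. apply Rplus_le_le_0_compat.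
    unfold Rdiv; apply Rmult_le_pos; [apply Rmult_le_pos; auto| left; apply Rinv_0_lt_compat; lra].
    apply Rmult_le_pos; [apply Rmult_le_pos; lra|].
    assert (0 <= D1 / c) by (unfold Rdiv; apply Rmult_le_pos; [auto| left; apply Rinv_0_lt_compat; lra]). lra. }
  set (C4 := 2 * C3 / m).
  assert (HC4 : 0 <= C4) by (unfold C4, Rdiv; apply Rmult_le_pos; [lra| left; apply Rinv_0_lt_compat; lra]).
  set (e := fun i => dx * eta p tstar eps tau u taub ub i s).
  set (Fl := FlZ p dp lam dx eps tau u taub ub s).
  set (src := sZ dp eps dx sigma L ub taub dtaub s).
  assert (Hs' : 0 <= s < T) by lra.
  assert (He0 : forall i, 0 <= e i).
  { intros i. pose proof (eta_lb p dp d2p tstar sigma c M K T eps dx lam tau u taub ub dtau du dtaub dub Phi m i s Hp Hc Hm Hmb HS Hs'). unfold e; lra. }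
  assert (Hw : forall i, C3 * dx * (tau i s - taub i s) ^ 2 <= C4 * e i).
  { intros i. pose proof (eta_lb p dp d2p tstar sigma c M K T eps dx lam tau u taub ub dtau du dtaub dub Phi m i s Hp Hc Hm Hmb HS Hs') as [H1 H2].
    fold (e i) in H1. apply Rmult_le_compat_l with (r := C4) in H1; auto.
    eapply Rle_trans; [|apply H1]. right. unfold C4. field. lra. }
  assert (Hgi : forall i, g i <= dx * (Fl (i + 1)%Z - Fl i) + C4 * (e (i - 1)%Z + e i) + src i).
  { intros i.
    pose proof (gform_deriv p dp d2p tstar sigma c M K T eps dx lam tau u taub ub dtau du dtaub dub Phi i s Hp Hc HS Hs) as Hd.
    rewrite (uniqueness_limite _ _ _ _ (Hg i) Hd).
    pose proof (site_Z p dp d2p tstar sigma c M K T eps dx lam tau u taub ub dtau du dtaub dub Phi D1 D2 L Kp i s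
      Hp Hc HcM Hsig HD1 HD2 HKp Hlam0 Hd1' Hd2 HS Hs) as Hsz.
    fold C3 Fl src in Hsz.
    pose proof (Hw (i-1)%Z). pose proof (Hw i). nra. }
  assert (Hsm : forall N, Zfinsum N g <= dx * (Fl (Z.of_nat N + 1)%Z - Fl (- Z.of_nat N)%Z)
                     + 2 * C4 * Zfinsum (S N) e + Zfinsum N src).
  { intros N. eapply Rle_trans. apply Zfinsum_le. apply Hgi.
    rewrite !Zfinsum_plus, Zfinsum_scal, Zfinsum_tele, Zfinsum_scal, Zfinsum_plus.
    pose proof (Zfinsum_shiftm1 e N He0). pose proof (Zfinsum_mono e N He0).
    assert (C4 * Zfinsum N (fun i => e (i - 1)%Z) <= C4 * Zfinsum (S N) e) by (apply Rmult_le_compat_l; auto).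
    assert (C4 * Zfinsum N e <= C4 * Zfinsum (S N) e) by (apply Rmult_le_compat_l; auto).
    lra. }
  pose proof HS as HS'. dset HS'. clear Hsum.
  destruct (Zfinsum_cv g l Hl (dl / 4) ltac:(lra)) as [N1 HN1].
  assert (Hpos4 : 0 < dl / (4 * (1 + 2 * C4))) by (apply Rdiv_lt_0_compat; lra).
  destruct (Zfinsum_cv e (Phi s) (HPhi s Hs') _ Hpos4) as [N2 HN2].
  destruct (Fl_lims p dp d2p tstar sigma c M K T eps dx lam tau u taub ub dtau du dtaub dub Phi s Hp HS Hs') as [F1 F2].
  assert (Hpos5 : 0 < dl / (4 * dx)) by (apply Rdiv_lt_0_compat; lra).
  destruct (F1 _ Hpos5) as [N3 HN3]. destruct (F2 _ Hpos5) as [N4 HN4].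
  set (N := (N1 + N2 + N3 + N4)%nat).
  exists N.
  specialize (HN1 N ltac:(unfold N; lia)). specialize (HN2 (S N) ltac:(unfold N; lia)).
  specialize (HN3 N ltac:(unfold N; lia)). specialize (HN4 N ltac:(unfold N; lia)).
  unfold Rdist in HN3, HN4. rewrite Rminus_0_r in HN3, HN4.
  fold Fl in HN3, HN4.
  apply Rlt_le, abs_le_inv in HN1, HN2, HN3, HN4.
  specialize (Hsm N).
  assert (dx * Fl (Z.of_nat N + 1)%Z <= dl / 4).
  { replace (dl / 4) with (dx * (dl / (4 * dx))) by (field; lra). apply Rmult_le_compat_l; lra. }
  assert (- (dl / 4) <= dx * Fl (- Z.of_nat N)%Z).
  { replace (- (dl / 4)) with (dx * - (dl / (4 * dx))) by (field; lra). apply Rmult_le_compat_l; lra. }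
  assert (2 * C4 * Zfinsum (S N) e <= 2 * C4 * Phi s + dl / 4).
  { assert (2 * C4 * (Zfinsum (S N) e - Phi s) <= 2 * C4 * (dl / (4 * (1 + 2 * C4)))) by (apply Rmult_le_compat_l; lra).
    assert (2 * C4 * (dl / (4 * (1 + 2 * C4))) <= dl / 4).
    { replace (2 * C4 * (dl / (4 * (1 + 2 * C4)))) with (dl / 4 * (2 * C4 / (1 + 2 * C4))) by (field; lra).
      assert (2 * C4 / (1 + 2 * C4) <= 1).
      { apply (Rmult_le_reg_r (1 + 2 * C4)); [lra|]. replace (2 * C4 / (1 + 2 * C4) * (1 + 2 * C4)) with (2 * C4) by (field; lra). lra. }
      assert (0 <= dl / 4) by lra. nra. }
    lra. }
  fold src. lra.
Qed.

Lemma ct_plus f g x : continuity_pt f x -> continuity_pt g x -> continuity_pt (fun y => f y + g y) x.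
Proof. apply continuity_pt_plus. Qed.
Lemma ct_minus f g x : continuity_pt f x -> continuity_pt g x -> continuity_pt (fun y => f y - g y) x.
Proof. apply continuity_pt_minus. Qed.
Lemma ct_mult f g x : continuity_pt f x -> continuity_pt g x -> continuity_pt (fun y => f y * g y) x.
Proof. apply continuity_pt_mult. Qed.
Lemma ct_const (a : R) x : continuity_pt (fun _ => a) x.
Proof. apply continuity_pt_const. intros u v; reflexivity. Qed.
Lemma ct_div f (a : R) x : continuity_pt f x -> continuity_pt (fun y => f y / a) x.
Proof. intros. unfold Rdiv. apply (ct_mult f (fun _ => / a)); auto. apply ct_const. Qed.
Lemma ct_sq f x : continuity_pt f x -> continuity_pt (fun y => f y ^ 2) x.
Proof. intros. apply (continuity_pt_locally_ext (fun y => f y * f y) _ 1); auto. lra. intros; ring.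
  apply ct_mult; auto. Qed.
Lemma ct_comp f g x : continuity_pt f x -> continuity_pt g (f x) -> continuity_pt (fun y => g (f y)) x.
Proof. intros. apply (continuity_pt_comp f g x); auto. Qed.

Ltac ctac :=
 lazymatch goal with
 | |- continuity_pt (fun s => @?f s + @?g s) _ => apply (ct_plus f g); ctac
 | |- continuity_pt (fun s => @?f s - @?g s) _ => apply (ct_minus f g); ctac
 | |- continuity_pt (fun s => @?f s * @?g s) _ => apply (ct_mult f g); ctac
 | |- continuity_pt (fun s => @?f s / ?c) _ => apply (ct_div f c); ctac
 | |- continuity_pt (fun s => (@?f s) ^ 2) _ => apply (ct_sq f); ctac
 | |- continuity_pt (fun _ => ?a) _ => apply ct_const
 | _ => idtac
 end.

Definition EC (T : R) (F : R -> R) := forall x, 0 <= x < T -> continuity_pt (fun y => F (Rmax 0 y)) x.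

Lemma EC_of_within T F : (forall y, 0 <= y < T -> within_cont F T y) -> EC T F.
Proof.
  intros H x Hx eps Heps.
  destruct (H x Hx eps Heps) as [al [Hal Hal2]].
  exists (Rmin al (T - x)). split. apply Rmin_case; lra.
  intros y [_ Hy]. simpl in *. unfold Rdist in *.
  assert (Hy1 : Rabs (y - x) < al) by (pose proof (Rmin_l al (T - x)); lra).
  assert (Hy2 : Rabs (y - x) < T - x) by (pose proof (Rmin_r al (T - x)); lra).
  rewrite (Rmax_right 0 x) by lra.
  apply Hal2. split.
  - unfold Rmax. destruct (Rle_dec 0 y).
    + pose proof (Rle_abs (y - x)). lra.
    + lra.
  - simpl. unfold Rdist. unfold Rmax. destruct (Rle_dec 0 y); auto.
    eapply Rle_lt_trans; [|apply Hy1]. rewrite !Rabs_left1 by lra. lra.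
Qed.

Lemma EC_ext T F G : (forall r, F r = G r) -> EC T F -> EC T G.
Proof. intros E H x Hx. apply (continuity_pt_locally_ext (fun y => F (Rmax 0 y)) _ 1); auto. lra. Qed.

Lemma EC_cont T F s : EC T F -> 0 < s < T -> continuity_pt F s.
Proof.
  intros H Hs. apply (continuity_pt_locally_ext (fun y => F (Rmax 0 y)) _ s); [lra| |apply H; lra].
  intros y Hy. unfold Rdist in Hy. apply Rlt_le, abs_le_inv in Hy. rewrite Rmax_right by lra. auto.
Qed.

Lemma RI_ext_on F G a b : (forall x, Rmin a b <= x <= Rmax a b -> F x = G x) ->
  Riemann_integrable G a b -> Riemann_integrable F a b.
Proof.
  intros E H eps. destruct (H eps) as [phi [psi [H1 H2]]]. exists phi, psi. split; auto.
  intros t Ht. rewrite E; auto.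
Qed.

Lemma EC_int T F s : EC T F -> 0 <= s < T -> Riemann_integrable F 0 s.
Proof.
  intros H Hs. apply (RI_ext_on F (fun y => F (Rmax 0 y))).
  - intros x Hx. rewrite Rmin_left, Rmax_right in Hx by lra. rewrite Rmax_right by lra. auto.
  - apply continuity_implies_RiemannInt; [lra|]. intros; apply H; lra.
Qed.

Lemma ct_sum (F : nat -> R -> R) n x : (forall k, continuity_pt (F k) x) ->
  continuity_pt (fun y => sum_f_R0 (fun k => F k y) n) x.
Proof.
  intros H. induction n; simpl.
  - apply (continuity_pt_locally_ext (F 0%nat) _ 1); auto; lra.
  - apply (ct_plus (fun y => sum_f_R0 (fun k => F k y) n) (F (S n))); auto.
Qed.

Lemma EC_Zfinsum T (F : Z -> R -> R) N : (forall i, EC T (F i)) -> EC T (fun r => Zfinsum N (fun i => F i r)).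
Proof.
  intros H x Hx. unfold Zfinsum.
  apply (ct_sum (fun k y => F (Z.of_nat k - Z.of_nat N)%Z (Rmax 0 y))). intros k. apply H; auto.
Qed.

Lemma int_comb2 F A B a b s KA KB (HA : Riemann_integrable A 0 s) (HB : Riemann_integrable B 0 s) :
  0 <= s -> 0 <= a -> 0 <= b -> (forall r, F r = a * A r + b * B r) ->
  RiemannInt HA <= KA -> RiemannInt HB <= KB ->
  { pr : Riemann_integrable F 0 s | RiemannInt pr <= a * KA + b * KB }.
Proof.
  intros Hs Ha Hb E HKA HKB.
  pose (pr0 := RiemannInt_P14 0 s 0).
  pose (prA1 := @RiemannInt_P10 (fct_cte 0) A 0 s a pr0 HA).
  assert (I1 : RiemannInt prA1 = a * RiemannInt HA).
  { rewrite (RiemannInt_P13 pr0 HA prA1). rewrite RiemannInt_P15. ring. }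
  assert (prA2 : Riemann_integrable (fun x => a * A x) 0 s).
  { refine (RI_ext_on _ _ _ _ _ prA1). intros; unfold fct_cte; ring. }
  assert (I2 : RiemannInt prA2 = RiemannInt prA1).
  { apply RiemannInt_P18; auto. intros; unfold fct_cte; ring. }
  pose (prF1 := @RiemannInt_P10 (fun x => a * A x) B 0 s b prA2 HB).
  assert (I3 : RiemannInt prF1 = RiemannInt prA2 + b * RiemannInt HB) by apply RiemannInt_P13.
  assert (prF : Riemann_integrable F 0 s).
  { apply (RI_ext_on F _ 0 s (fun x _ => E x) prF1). }
  exists prF.
  assert (I4 : RiemannInt prF = RiemannInt prF1) by (apply RiemannInt_P18; auto).
  rewrite I4, I3, I2, I1.
  assert (a * RiemannInt HA <= a * KA) by (apply Rmult_le_compat_l; auto).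
  assert (b * RiemannInt HB <= b * KB) by (apply Rmult_le_compat_l; auto).
  lra.
Qed.


Definition AN dx (ub : Z -> R -> R) N s := Zfinsum N (fun i => dx * (Dxx dx ub i s) ^ 2).
Definition BN dp dx (taub dtaub : Z -> R -> R) N s :=
  Zfinsum N (fun i => dx * (Dtx_tilde dx (fun i t => dp (taub i t) * dtaub i t) i s) ^ 2).
Definition Sf dp eps dx sigma L (ub taub dtaub : Z -> R -> R) N s := Zfinsum N (sZ dp eps dx sigma L ub taub dtaub s).

Lemma Zfinsum_ext f g N : (forall i, f i = g i) -> Zfinsum N f = Zfinsum N g.
Proof. intros E. apply Rle_antisym; apply Zfinsum_le; intros; rewrite E; lra. Qed.

Lemma EC_AN p dp tstar sigma c M K T eps dx lam tau u taub ub dtau du dtaub dub Phi N :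
  setting p dp tstar sigma c M K T eps dx lam tau u taub ub dtau du dtaub dub Phi -> EC T (AN dx ub N).
Proof.
  intros HS. dset HS. unfold AN. apply EC_Zfinsum. intros i x Hx.
  assert (Hub : forall j, continuity_pt (fun y => ub j (Rmax 0 y)) x).
  { intros j. refine (EC_of_within T (ub j) _ x Hx). intros y Hy. apply (proj2 (proj2 (proj2 (proj2 (HC1 j)))) y Hy). }
  unfold Dxx. ctac; apply Hub.
Qed.

Lemma EC_BN p dp d2p tstar sigma c M K T eps dx lam tau u taub ub dtau du dtaub dub Phi N :
  HypP p dp d2p -> 0 < c ->
  setting p dp tstar sigma c M K T eps dx lam tau u taub ub dtau du dtaub dub Phi -> EC T (BN dp dx taub dtaub N).
Proof.
  intros Hp Hc HS. dset HS. unfold BN. apply EC_Zfinsum. intros i x Hx.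
  assert (Htb : forall j, continuity_pt (fun y => taub j (Rmax 0 y)) x).
  { intros j. refine (EC_of_within T (taub j) _ x Hx). intros y Hy. apply (proj1 (proj2 (proj1 (proj2 (proj2 (HC1 j)))) y Hy)). }
  assert (Hdtb : forall j, continuity_pt (fun y => dtaub j (Rmax 0 y)) x).
  { intros j. refine (EC_of_within T (dtaub j) _ x Hx). intros y Hy. apply (proj2 (proj2 (proj1 (proj2 (proj2 (HC1 j)))) y Hy)). }
  assert (Hdp : forall j, continuity_pt (fun y => dp (taub j (Rmax 0 y))) x).
  { intros j. apply (ct_comp (fun y => taub j (Rmax 0 y)) dp); auto.
    apply (hp_cdp p dp d2p); auto.
    assert (0 <= Rmax 0 x < T) by (unfold Rmax; destruct (Rle_dec 0 x); lra).
    destruct (Hbnd j (Rmax 0 x) H) as [_ [H1 _]]. lra. }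
  unfold Dtx_tilde. ctac; auto.
Qed.

Lemma Sf_eq dp eps dx sigma L (ub taub dtaub : Z -> R -> R) N s :
  0 < sigma ->
  Sf dp eps dx sigma L ub taub dtaub N s = eps ^ 4 * (L ^ 2 / (4 * sigma)) * AN dx ub N s + eps ^ 4 / sigma ^ 3 * BN dp dx taub dtaub N s.
Proof.
  intros Hs. unfold Sf, AN, BN.
  rewrite <- !Zfinsum_scal, <- Zfinsum_plus. apply Zfinsum_ext. intros i. unfold sZ, Ysrc. field. lra.
Qed.

Lemma Sf_props p dp d2p tstar sigma c M K T eps dx lam tau u taub ub dtau du dtaub dub Phi L Kp :
  HypP p dp d2p -> 0 < c -> 0 < sigma -> Rabs K <= Kp ->
  setting p dp tstar sigma c M K T eps dx lam tau u taub ub dtau du dtaub dub Phi ->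
  (forall N, EC T (Sf dp eps dx sigma L ub taub dtaub N)) /\
  (forall N s, 0 <= s < T -> 0 <= Sf dp eps dx sigma L ub taub dtaub N s) /\
  (forall N s, 0 <= s < T -> Sf dp eps dx sigma L ub taub dtaub N s <= Sf dp eps dx sigma L ub taub dtaub (S N) s) /\
  (forall N s, 0 <= s < T -> Rint (Sf dp eps dx sigma L ub taub dtaub N) 0 s <=
       eps ^ 4 * (L ^ 2 / (4 * sigma)) * Kp ^ 2 + eps ^ 4 / sigma ^ 3 * Kp ^ 2).
Proof.
  intros Hp Hc Hsig HKp HS.
  assert (HEA : forall N, EC T (AN dx ub N)) by (intros; exact (EC_AN p dp tstar sigma c M K T eps dx lam tau u taub ub dtau du dtaub dub Phi N HS)).
  assert (HEB : forall N, EC T (BN dp dx taub dtaub N)) by (intros; exact (EC_BN p dp d2p tstar sigma c M K T eps dx lam tau u taub ub dtau du dtaub dub Phi N Hp Hc HS)).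
  pose proof HS as HS'. dset HS'.
  assert (Hnn : forall s i, 0 <= sZ dp eps dx sigma L ub taub dtaub s i).
  { intros s i. unfold sZ. apply Rmult_le_pos. apply Rmult_le_pos. apply pow_le; lra. lra.
    apply Rplus_le_le_0_compat. apply Rmult_le_pos. unfold Rdiv. apply Rmult_le_pos. apply pow2_ge_0.
    left; apply Rinv_0_lt_compat; lra. apply pow2_ge_0.
    unfold Rdiv. apply Rmult_le_pos. apply pow2_ge_0. left; apply Rinv_0_lt_compat. apply pow_lt; lra. }
  assert (Ha : 0 <= eps ^ 4 * (L ^ 2 / (4 * sigma))).
  { apply Rmult_le_pos. apply pow_le; lra. unfold Rdiv; apply Rmult_le_pos. apply pow2_ge_0. left; apply Rinv_0_lt_compat; lra. }
  assert (Hb : 0 <= eps ^ 4 / sigma ^ 3).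
  { unfold Rdiv; apply Rmult_le_pos. apply pow_le; lra. left; apply Rinv_0_lt_compat; apply pow_lt; lra. }
  assert (HK2 : K ^ 2 <= Kp ^ 2).
  { rewrite (pow2_abs K). apply pow_incr. split; auto. apply Rabs_pos. }
  split; [|split; [|split]].
  - intros N. apply (EC_ext T (fun r => eps ^ 4 * (L ^ 2 / (4 * sigma)) * AN dx ub N r + eps ^ 4 / sigma ^ 3 * BN dp dx taub dtaub N r)).
    intros r. rewrite Sf_eq; auto.
    intros x Hx. apply (ct_plus (fun y => eps ^ 4 * (L ^ 2 / (4 * sigma)) * AN dx ub N (Rmax 0 y)) (fun y => eps ^ 4 / sigma ^ 3 * BN dp dx taub dtaub N (Rmax 0 y))).
    apply (ct_mult (fun _ => eps ^ 4 * (L ^ 2 / (4 * sigma))) (fun y => AN dx ub N (Rmax 0 y))). apply ct_const. apply HEA; auto.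
    apply (ct_mult (fun _ => eps ^ 4 / sigma ^ 3) (fun y => BN dp dx taub dtaub N (Rmax 0 y))). apply ct_const. apply HEB; auto.
  - intros N s Hs. unfold Sf. apply Zfinsum_nonneg. auto.
  - intros N s Hs. unfold Sf. apply Zfinsum_mono. auto.
  - intros N s Hs.
    destruct HL2a as [_ HL2a]. destruct HL2b as [_ HL2b].
    pose (prA := EC_int T (AN dx ub N) s (HEA N) Hs).
    pose (prB := EC_int T (BN dp dx taub dtaub N) s (HEB N) Hs).
    assert (HA : RiemannInt prA <= Kp ^ 2) by (eapply Rle_trans; [apply HL2b; auto| auto]).
    assert (HB : RiemannInt prB <= Kp ^ 2) by (eapply Rle_trans; [apply HL2a; auto| auto]).
    destruct (int_comb2 (Sf dp eps dx sigma L ub taub dtaub N) _ _ _ _ s _ _ prA prB ltac:(lra) Ha Hb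
       (fun r => Sf_eq dp eps dx sigma L ub taub dtaub N r Hsig) HA HB) as [pr Hpr].
    rewrite (Rint_val _ _ _ pr). auto.
Qed.

Lemma exp_le_mono x y : x <= y -> exp x <= exp y.
Proof. intros [H|H]; [left; apply exp_increasing; auto| subst; lra]. Qed.

Lemma cont_lim g D x : continuity_pt g x -> limit1_in g D (g x) x.
Proof.
  intros H eps Heps. destruct (H eps Heps) as [al [Hal Hal2]]. exists al. split; auto.
  intros y [_ Hy]. destruct (Req_dec y x) as [E|E].
  - subst. simpl. unfold Rdist. rewrite Rminus_diag, Rabs_R0. lra.
  - apply Hal2. split; auto. split; [exact I| auto].
Qed.

Lemma lam_bounds dp tau T lam c M D1 :
  0 < T -> lambda_def dp tau T lam ->
  (forall i t, 0 < t < T -> c <= tau i t <= M) ->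
  (forall x, c <= x <= M -> Rabs (dp x) <= D1) ->
  0 <= lam <= sqrt D1.
Proof.
  intros HT [Hub Hlub] Hb Hd. split.
  - apply Rle_trans with (sqrt (- dp (tau 0%Z (T/2)))). apply sqrt_pos.
    apply Hub. exists (T/2), 0%Z. split; [lra| auto].
  - apply Hlub. intros y [t [i [Ht E]]]. rewrite E. apply sqrt_le_1_alt.
    pose proof (Hd (tau i t) (Hb i t Ht)). pose proof (Rle_abs (- dp (tau i t))). rewrite Rabs_Ropp in H0. lra.
Qed.

Lemma part1 p dp d2p sigma c M K :
  HypP p dp d2p -> 0 < sigma -> 0 < c -> c < M ->
  exists B : R, 0 < B /\
     forall (tstar T eps dx lam : R)
            (tau u taub ub dtau du dtaub dub : Z -> R -> R) (Phi : R -> R),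
       setting p dp tstar sigma c M K T eps dx lam
               tau u taub ub dtau du dtaub dub Phi ->
       forall t, 0 <= t < T ->
         Phi t <= B * exp (B * T) * (Phi 0 + eps ^ 4).
Proof.
  intros Hp Hsig Hc HcM.
  destruct (pconsts p dp d2p c M Hp Hc HcM) as [D1 [m [D2 [Hm [HD1 [HD2 [Hd1 Hd2]]]]]]].
  set (L := sqrt D1). set (Kp := Rabs K).
  set (C3 := D2 * Kp / sigma + L * Kp * (2 * D2 + 2 * D1 / c)).
  set (B0 := 2 * (2 * C3 / m)).
  set (CC := (L ^ 2 / (4 * sigma) + 1 / sigma ^ 3) * Kp ^ 2).
  assert (HKp : 0 <= Kp) by apply Rabs_pos.
  assert (HL : 0 <= L) by apply sqrt_pos.
  assert (HC3 : 0 <= C3).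
  { unfold C3. apply Rplus_le_le_0_compat.
    unfold Rdiv; apply Rmult_le_pos; [apply Rmult_le_pos; auto| left; apply Rinv_0_lt_compat; lra].
    apply Rmult_le_pos; [apply Rmult_le_pos; lra|].
    assert (0 <= D1 / c) by (unfold Rdiv; apply Rmult_le_pos; [auto| left; apply Rinv_0_lt_compat; lra]). lra. }
  assert (HB0 : 0 <= B0) by (unfold B0, Rdiv; apply Rmult_le_pos; [lra| apply Rmult_le_pos; [lra| left; apply Rinv_0_lt_compat; lra]]).
  assert (HCC : 0 <= CC).
  { unfold CC. apply Rmult_le_pos; [|apply pow2_ge_0]. apply Rplus_le_le_0_compat.
    unfold Rdiv; apply Rmult_le_pos; [apply pow2_ge_0| left; apply Rinv_0_lt_compat; lra].
    unfold Rdiv; apply Rmult_le_pos; [lra| left; apply Rinv_0_lt_compat; apply pow_lt; lra]. }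
  exists (1 + B0 + CC). split; [lra|].
  intros tstar T eps dx lam tau u taub ub dtau du dtaub dub Phi HS t Ht.
  assert (Hmb : forall x, c<=x<=M -> m <= - dp x) by (intros; apply Hd1; auto).
  assert (Hd1' : forall x, c<=x<=M -> Rabs (dp x) <= D1) by (intros; apply Hd1; auto).
  pose proof HS as HS'. dset HS'.
  assert (Hlam0 : 0 <= lam <= L).
  { apply (lam_bounds dp tau T lam c M D1); auto. intros i s Hs. apply (Hbnd i s ltac:(lra)). }
  assert (HKK : Rabs K <= Kp) by (unfold Kp; lra).
  destruct (Sf_props p dp d2p tstar sigma c M K T eps dx lam tau u taub ub dtau du dtaub dub Phi L Kp Hp Hc Hsig HKK HS)
    as [HEC [Hpos [Hmon Hbd]]].
  set (psi := fun s => Phi s * exp (- B0 * s)).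
  assert (Hg : psi t <= psi 0 + (eps ^ 4 * (L ^ 2 / (4 * sigma)) * Kp ^ 2 + eps ^ 4 / sigma ^ 3 * Kp ^ 2)).
  { apply (gronwall T t _ psi (Sf dp eps dx sigma L ub taub dtaub)
      (fun N s Hs => EC_int T _ s (HEC N) Hs)); auto.
    - unfold psi. replace (Phi 0 * exp (- B0 * 0)) with (Phi 0 * exp (- B0 * 0)) by reflexivity.
      apply limit_mul; auto. apply (cont_lim (fun s => exp (- B0 * s))) .
      apply (ct_comp (fun s => - B0 * s) exp). apply (ct_mult (fun _ => - B0) (fun s => s)). apply ct_const.
      apply derivable_continuous_pt. apply derivable_pt_id. apply derivable_continuous_pt. apply derivable_pt_exp.
    - intros s Hs dl Hdl.
      destruct (HdPhi s Hs) as [g [l [Hgi [Hzs Hds]]]].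
      destruct (dphi_bound p dp d2p tstar sigma c M K T eps dx lam tau u taub ub dtau du dtaub dub Phi D1 m D2 L Kp s g l
        Hp Hc HcM Hsig Hm HD1 HD2 HKK Hlam0 Hd1 Hd2 HS Hs Hgi Hzs dl Hdl) as [N HN].
      fold C3 in HN. fold B0 in HN.
      exists N, (l * exp (- B0 * s) + Phi s * (exp (- B0 * s) * (0 * s + - B0 * 1))).
      split.
      + unfold psi. apply (dl_mult Phi (fun s => exp (- B0 * s))); auto.
        apply (dl_comp (fun s => - B0 * s) exp). apply (dl_mult (fun _ => - B0) (fun s => s)). apply dl_const. apply dl_id.
        apply derivable_pt_lim_exp.
      + assert (He : 0 < exp (- B0 * s)) by apply exp_pos.
        assert (He1 : exp (- B0 * s) <= 1) by (rewrite <- exp_0; apply exp_le_mono; nra).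
        assert (0 <= Sf dp eps dx sigma L ub taub dtaub N s) by (apply Hpos; lra).
        assert (l - B0 * Phi s <= Sf dp eps dx sigma L ub taub dtaub N s + dl) by (unfold Sf; lra).
        replace (l * exp (- B0 * s) + Phi s * (exp (- B0 * s) * (0 * s + - B0 * 1))) with ((l - B0 * Phi s) * exp (- B0 * s)) by ring.
        apply Rle_trans with ((Sf dp eps dx sigma L ub taub dtaub N s + dl) * exp (- B0 * s)).
        apply Rmult_le_compat_r; lra. nra.
    - intros N s Hs. apply (EC_cont T); auto. }
  unfold psi in Hg. rewrite Rmult_0_r, exp_0, Rmult_1_r in Hg.
  assert (HP0 : 0 <= Phi 0) by (eapply (Phi_nonneg p dp d2p tstar sigma c M K T eps dx lam tau u taub ub dtau du dtaub dub Phi m 0); eauto; lra).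
  assert (E1 : eps ^ 4 * (L ^ 2 / (4 * sigma)) * Kp ^ 2 + eps ^ 4 / sigma ^ 3 * Kp ^ 2 = eps ^ 4 * CC) by (unfold CC; field; lra).
  rewrite E1 in Hg.
  assert (Hexp : Phi t = Phi t * exp (- B0 * t) * exp (B0 * t)).
  { rewrite Rmult_assoc, <- exp_plus. replace (- B0 * t + B0 * t) with 0 by ring. rewrite exp_0. ring. }
  assert (He2 : exp (B0 * t) <= exp ((1 + B0 + CC) * T)) by (apply exp_le_mono; nra).
  assert (He3 : 0 < exp (B0 * t)) by apply exp_pos.
  assert (Hx : 0 <= eps ^ 4) by (apply pow_le; lra).
  assert (Hq : Phi 0 + eps ^ 4 * CC <= (1 + B0 + CC) * (Phi 0 + eps ^ 4)) by nra.
  assert (Hq0 : 0 <= Phi 0 + eps ^ 4 * CC) by nra.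
  rewrite Hexp.
  apply Rle_trans with ((Phi 0 + eps ^ 4 * CC) * exp (B0 * t)).
  { apply Rmult_le_compat_r; lra. }
  apply Rle_trans with ((1 + B0 + CC) * (Phi 0 + eps ^ 4) * exp ((1 + B0 + CC) * T)).
  { apply Rmult_le_compat; lra. }
  right; ring.
Qed.

Theorem theorem3p1 (p dp d2p : R -> R) (sigma c M K : R)
  (Hp : forall x, 0 < x ->
          derivable_pt_lim p x (dp x) /\ derivable_pt_lim dp x (d2p x) /\
          continuity_pt d2p x /\ 0 < p x /\ dp x < 0)
  (Hsigma : 0 < sigma) (Hc : 0 < c) (HcM : c < M) :
  (exists B : R, 0 < B /\
     forall (tstar T eps dx lam : R)
            (tau u taub ub dtau du dtaub dub : Z -> R -> R) (Phi : R -> R),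
       setting p dp tstar sigma c M K T eps dx lam
               tau u taub ub dtau du dtaub dub Phi ->
       forall t, 0 <= t < T ->
         Phi t <= B * exp (B * T) * (Phi 0 + eps ^ 4)) /\
  (forall (tstar T dx : R) (lamf : R -> R)
          (tauf uf taubf ubf dtauf duf dtaubf dubf : R -> Z -> R -> R)
          (Phif : R -> R -> R),
     (forall eps, 0 < eps ->
        setting p dp tstar sigma c M K T eps dx (lamf eps)
                (tauf eps) (uf eps) (taubf eps) (ubf eps)
                (dtauf eps) (duf eps) (dtaubf eps) (dubf eps) (Phif eps)) ->
     (forall e, 0 < e -> exists d, 0 < d /\
        forall eps, 0 < eps < d -> Rabs (Phif eps 0) < e) ->
     forall e, 0 < e -> exists d, 0 < d /\
        forall eps, 0 < eps < d ->
          forall t, 0 <= t < T -> Rabs (Phif eps t) <= e).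
Proof.
  assert (Hp' : HypP p dp d2p) by exact Hp.
  pose proof (part1 p dp d2p sigma c M K Hp' Hsigma Hc HcM) as P1.
  split; [exact P1|].
  destruct P1 as [B [HB P1]].
  intros tstar T dx lamf tauf uf taubf ubf dtauf duf dtaubf dubf Phif HS H0 e He.
  destruct (pconsts p dp d2p c M Hp' Hc HcM) as [D1 [m [D2 [Hm [HD1 [HD2 [Hd1 Hd2]]]]]]].
  assert (Hmb : forall x, c<=x<=M -> m <= - dp x) by (intros; apply Hd1; auto).
  set (A := B * exp (B * T)).
  assert (HA : 0 < A) by (unfold A; apply Rmult_lt_0_compat; [auto| apply exp_pos]).
  set (e1 := e / (2 * A)).
  assert (He1 : 0 < e1) by (unfold e1; apply Rdiv_lt_0_compat; lra).
  destruct (H0 e1 He1) as [d1 [Hd1pos Hd1']].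
  exists (Rmin d1 (Rmin 1 e1)). split.
  { apply Rmin_case; [auto| apply Rmin_case; lra]. }
  intros eps Heps t Ht.
  assert (Heps1 : eps < d1) by (pose proof (Rmin_l d1 (Rmin 1 e1)); lra).
  assert (Heps2 : eps < 1) by (pose proof (Rmin_r d1 (Rmin 1 e1)); pose proof (Rmin_l 1 e1); lra).
  assert (Heps3 : eps < e1) by (pose proof (Rmin_r d1 (Rmin 1 e1)); pose proof (Rmin_r 1 e1); lra).
  pose proof (HS eps (proj1 Heps)) as HSe.
  pose proof (P1 _ _ _ _ _ _ _ _ _ _ _ _ _ _ HSe t Ht) as Hb.
  pose proof (Phi_nonneg p dp d2p tstar sigma c M K T eps dx (lamf eps) (tauf eps) (uf eps) (taubf eps) (ubf eps)
     (dtauf eps) (duf eps) (dtaubf eps) (dubf eps) (Phif eps) m t Hp' Hc Hm Hmb HSe Ht) as Hnn.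
  pose proof (Hd1' eps (conj (proj1 Heps) Heps1)) as H0e.
  rewrite Rabs_right by lra.
  assert (Hep4 : eps ^ 4 <= eps).
  { replace (eps ^ 4) with (eps * eps ^ 3) by ring. 
    assert (eps ^ 3 <= 1). { replace 1 with (1 ^ 3) by ring. apply pow_incr. lra. }
    assert (0 < eps) by lra. nra. }
  apply Rle_trans with (A * (Phif eps 0 + eps ^ 4)); [exact Hb|].
  apply Rle_trans with (A * (e1 + e1)).
  { apply Rmult_le_compat_l; [lra|]. 
    pose proof (Rle_abs (Phif eps 0)). lra. }
  unfold e1. right. field. lra.
Qed.
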